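(* Let $M \geq 1$ and let $f \colon (\mathbb{W},d_{\mathrm{par}}) \to (\mathbb{H},d)$ be an $M$-bilipschitz map. For any $\epsilon \in (0,1]$ and $C \geq 1$ there exists a constant $C' = C'(C,\epsilon,M)$ such that $$\sum_{Q \in \mathcal{B}(C,\epsilon),\ Q \subset Q_{0}} \ell(Q)^{3} \leq C'\ell(Q_{0})^{3} \quad \text{for all } Q_{0} \in \mathcal{D},$$ where $\mathcal{B}(C,\epsilon) = \{Q \in \mathcal{D} : \rho_{f}(CQ) \geq \epsilon\}$.
   Context: $\mathbb{H}$ is $\mathbb{R}^{3}$ with group law $(x_{1},y_{1},t_{1}) \cdot (x_{2},y_{2},t_{2}) = (x_{1}+x_{2},y_{1}+y_{2},t_{1}+t_{2}+\tfrac{1}{2}(x_{1}y_{2}-x_{2}y_{1}))$, metric $d(p,q) = \|q^{-1}\cdot p\|$ with $\|(x,y,t)\| = \max\{\sqrt{x^{2}+y^{2}},\sqrt{|t|}\}$, and $N(E,\delta) = \{p : \operatorname{dist}(p,E) \leq \delta\}$. A horizontal line in $\mathbb{H}$ is a set $p \cdot \{(sa,sb,0) : s \in \mathbb{R}\}$ with $p \in \mathbb{H}$, $(a,b) \neq 0$. $\mathbb{W}$ is $\mathbb{R}^{2}$ with $d_{\mathrm{par}}((y,t),(\xi,\tau)) = \max\{|y-\xi|,|t-\tau|^{1/2}\}$; horizontal lines in $\mathbb{W}$ are the sets $\mathbb{R} \times \{t\}$; $B(w,r)$ is the closed $d_{\mathrm{par}}$-ball. The ruler coefficient $\rho_{f}(B(w,r))$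 is the infimum of $\rho > 0$ such that for every horizontal line $\ell \subset \mathbb{W}$ there is a horizontal line $L \subset \mathbb{H}$ with $f(\ell \cap B(w,r)) \subset N(L,\rho r)$. $\mathcal{D}$ is the family of dyadic parabolic rectangles $Q = [k2^{-n},(k+1)2^{-n}) \times [l4^{-n},(l+1)4^{-n})$, $\ell(Q) = 2^{-n}$, $c_{Q}$ its centre, and $CQ := B(c_{Q},C\ell(Q))$. *)

(* Defs.v *)
From Stdlib Require Import Reals Lra List ZArith.
Open Scope R_scope.

Definition Hpt : Type := (R * R * R)%type.

Definition Hmul (p q : Hpt) : Hpt :=
  let '(x1, y1, t1) := p in let '(x2, y2, t2) := q in
  (x1 + x2, y1 + y2, t1 + t2 + / 2 * (x1 * y2 - x2 * y1)).

Definition Hinv (p : Hpt) : Hpt :=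
  let '(x, y, t) := p in (- x, - y, - t).

Definition Hnorm (p : Hpt) : R :=
  let '(x, y, t) := p in Rmax (sqrt (x ^ 2 + y ^ 2)) (sqrt (Rabs t)).

Definition Hd (p q : Hpt) : R := Hnorm (Hmul (Hinv q) p).

(* p belongs to N(E, delta) = {p : dist(p,E) <= delta}, where
   dist(p,E) = inf_{q in E} d(p,q); "inf <= delta" is unfolded. *)
Definition in_Nbhd (E : Hpt -> Prop) (delta : R) (p : Hpt) : Prop :=
  forall eta, 0 < eta -> exists q, E q /\ Hd p q < delta + eta.

Definition H_horizontal_line (L : Hpt -> Prop) : Prop :=
  exists (p : Hpt) (a b : R), (a <> 0 \/ b <> 0) /\
    forall q, L q <-> exists s : R, q = Hmul p (s * a, s * b, 0).

Definition Wpt : Type := (R * R)%type.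

Definition dpar (w z : Wpt) : R :=
  let '(y, t) := w in let '(xi, tau) := z in
  Rmax (Rabs (y - xi)) (sqrt (Rabs (t - tau))).

Definition Wball (w : Wpt) (r : R) (z : Wpt) : Prop := dpar w z <= r.

Definition bilipschitz (M : R) (f : Wpt -> Hpt) : Prop :=
  forall w z, / M * dpar w z <= Hd (f w) (f z) /\ Hd (f w) (f z) <= M * dpar w z.

Definition ruler_admissible (f : Wpt -> Hpt) (w : Wpt) (r rho : R) : Prop :=
  forall t : R, exists L, H_horizontal_line L /\
    forall y : R, Wball w r (y, t) -> in_Nbhd L (rho * r) (f (y, t)).

(* rho_f(B(w,r)) >= eps, where rho_f is the infimum of admissible rho > 0
   (infimum of the empty set = +infinity). *)
Definition ruler_ge (f : Wpt -> Hpt) (w : Wpt) (r eps : R) : Prop :=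
  forall rho, 0 < rho -> ruler_admissible f w r rho -> eps <= rho.

(* Q = (n,k,l) denotes [k 2^-n,(k+1)2^-n) x [l 4^-n,(l+1)4^-n), n,k,l in Z *)
Definition dyadic : Type := (Z * Z * Z)%type.

Definition side (Q : dyadic) : R := let '(n, _, _) := Q in powerRZ 2 (- n).

Definition dyadic_set (Q : dyadic) (w : Wpt) : Prop :=
  let '(n, k, l) := Q in let '(y, t) := w in
  IZR k * powerRZ 2 (- n) <= y < (IZR k + 1) * powerRZ 2 (- n) /\
  IZR l * powerRZ 4 (- n) <= t < (IZR l + 1) * powerRZ 4 (- n).

Definition center (Q : dyadic) : Wpt :=
  let '(n, k, l) := Q in
  ((IZR k + / 2) * powerRZ 2 (- n), (IZR l + / 2) * powerRZ 4 (- n)).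

Definition dyadic_subset (Q Q0 : dyadic) : Prop :=
  forall w, dyadic_set Q w -> dyadic_set Q0 w.

(* Q in B(C,eps)  <=>  rho_f(CQ) >= eps, with CQ = B(c_Q, C l(Q)) *)
Definition in_bad (f : Wpt -> Hpt) (C eps : R) (Q : dyadic) : Prop :=
  ruler_ge f (center Q) (C * side Q) eps.

Definition sum_cubes (s : list dyadic) : R :=
  fold_right (fun Q acc => side Q ^ 3 + acc) 0 s.

(* Main.v *)
Require Import Defs.
From Stdlib Require Import Reals List ZArith.
From Stdlib Require Import Lra Lia Psatz ClassicalDescription Classical.
Open Scope R_scope.

Lemma sqrt_le_c (u c : R) : 0 <= c -> u <= c * c -> sqrt u <= c.
Proof.
  intros Hc Hu. destruct (Rle_lt_dec u 0) as [H|H].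
  - rewrite (sqrt_neg_0 u H); lra.
  - rewrite <- (sqrt_square c Hc). apply sqrt_le_1_alt. lra.
Qed.

Lemma sqrt_sq_le (u c : R) : 0 <= c -> sqrt u <= c -> u <= c * c.
Proof.
  intros Hc Hs. destruct (Rle_lt_dec u 0) as [H|H].
  - nra.
  - pose proof (sqrt_sqrt u (Rlt_le _ _ H)). pose proof (sqrt_pos u). nra.
Qed.

Lemma Rabs_le_between (a b : R) : Rabs a <= b -> -b <= a <= b.
Proof. unfold Rabs; destruct (Rcase_abs a); intros; lra. Qed.

Lemma abs_le_of_sq (u c : R) : 0 <= c -> u*u <= c*c -> Rabs u <= c.
Proof.
  intros Hc H. apply Rabs_le. split.
  - destruct (Rle_lt_dec (-c) u); auto. nra.
  - destruct (Rle_lt_dec u c); auto. nra.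
Qed.

Lemma cs_ineq (x1 y1 x2 y2 a b : R) : 0 <= a -> 0 <= b ->
  x1*x1 + y1*y1 <= a*a -> x2*x2+y2*y2 <= b*b ->
  Rabs (x1*x2 + y1*y2) <= a*b /\ Rabs (x1*y2 - x2*y1) <= a*b.
Proof.
  intros Ha Hb H1 H2.
  assert (E1: (x1*x2+y1*y2)^2 + (x1*y2-x2*y1)^2 = (x1*x1+y1*y1)*(x2*x2+y2*y2)) by ring.
  assert (P: (x1*x1+y1*y1)*(x2*x2+y2*y2) <= (a*b)*(a*b)).
  { assert (0 <= x1*x1+y1*y1) by nra. assert (0 <= x2*x2+y2*y2) by nra. nra. }
  assert (0 <= a*b) by nra.
  pose proof (pow2_ge_0 (x1*x2+y1*y2)). pose proof (pow2_ge_0 (x1*y2-x2*y1)).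
  split; apply abs_le_of_sq; auto; simpl in *; lra.
Qed.

Lemma Hnorm_ge (x y t : R) : sqrt (x^2+y^2) <= Hnorm (x,y,t) /\ sqrt (Rabs t) <= Hnorm (x,y,t).
Proof. unfold Hnorm. split; [apply Rmax_l | apply Rmax_r]. Qed.

Lemma Hnorm_nonneg p : 0 <= Hnorm p.
Proof. destruct p as [[x y] t]. pose proof (Hnorm_ge x y t) as [H _].
  pose proof (sqrt_pos (x^2+y^2)). lra. Qed.

Lemma Hnorm_bounds (x y t : R) :
  x*x + y*y <= Hnorm (x,y,t) * Hnorm (x,y,t) /\ Rabs t <= Hnorm (x,y,t) * Hnorm (x,y,t).
Proof.
  pose proof (Hnorm_ge x y t) as [H1 H2]. pose proof (Hnorm_nonneg (x,y,t)).
  split.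
  - apply sqrt_sq_le in H1; auto. replace (x^2+y^2) with (x*x+y*y) in H1 by ring. lra.
  - apply sqrt_sq_le in H2; auto.
Qed.

Lemma Hnorm_le (x y t c : R) : 0 <= c -> x*x+y*y <= c*c -> Rabs t <= c*c -> Hnorm (x,y,t) <= c.
Proof.
  intros Hc H1 H2. unfold Hnorm. apply Rmax_lub; apply sqrt_le_c; auto.
  replace (x^2+y^2) with (x*x+y*y) by ring. lra.
Qed.

Lemma Hnorm_mul p q : Hnorm (Hmul p q) <= Hnorm p + Hnorm q.
Proof.
  destruct p as [[x1 y1] t1]; destruct q as [[x2 y2] t2]. simpl Hmul.
  pose proof (Hnorm_bounds x1 y1 t1) as [A1 B1].
  pose proof (Hnorm_bounds x2 y2 t2) as [A2 B2].
  set (a := Hnorm (x1,y1,t1)) in *. set (b := Hnorm (x2,y2,t2)) in *.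
  assert (0 <= a) by apply Hnorm_nonneg. assert (0 <= b) by apply Hnorm_nonneg.
  destruct (cs_ineq x1 y1 x2 y2 a b) as [C1 C2]; auto.
  apply Hnorm_le; [lra| |].
  - apply Rabs_le_between in C1. nra.
  - apply Rabs_le_between in C2. apply Rabs_le_between in B1. apply Rabs_le_between in B2.
    apply Rabs_le; split; nra.
Qed.

Lemma Hinv_mul_assoc (p q r : Hpt) :
  Hmul (Hinv r) p = Hmul (Hmul (Hinv r) q) (Hmul (Hinv q) p).
Proof.
  destruct p as [[x1 y1] t1]; destruct q as [[x2 y2] t2]; destruct r as [[x3 y3] t3].
  unfold Hmul, Hinv. f_equal; [f_equal|]; field.
Qed.

Lemma Hd_tri p q r : Hd p r <= Hd p q + Hd q r.
Proof.
  unfold Hd. rewrite (Hinv_mul_assoc p q r).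
  pose proof (Hnorm_mul (Hmul (Hinv r) q) (Hmul (Hinv q) p)). lra.
Qed.

Lemma Hnorm_inv p : Hnorm (Hinv p) = Hnorm p.
Proof.
  destruct p as [[x y] t]. unfold Hnorm, Hinv. f_equal.
  - f_equal. ring.
  - rewrite Rabs_Ropp. reflexivity.
Qed.

Lemma Hd_sym p q : Hd p q = Hd q p.
Proof.
  unfold Hd. rewrite <- Hnorm_inv. f_equal.
  destruct p as [[x1 y1] t1]; destruct q as [[x2 y2] t2].
  unfold Hmul, Hinv. f_equal; [f_equal|]; field.
Qed.

Lemma Hd_nonneg p q : 0 <= Hd p q.
Proof. apply Hnorm_nonneg. Qed.

Lemma Hd_left g p q : Hd (Hmul g p) (Hmul g q) = Hd p q.
Proof.
  unfold Hd. f_equal.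
  destruct p as [[x1 y1] t1]; destruct q as [[x2 y2] t2]; destruct g as [[x3 y3] t3].
  unfold Hmul, Hinv. f_equal; [f_equal|]; field.
Qed.

Lemma Hd_refl p : Hd p p = 0.
Proof.
  destruct p as [[x y] t]. unfold Hd, Hmul, Hinv, Hnorm.
  replace (- x + x) with 0 by ring. replace (- y + y) with 0 by ring.
  replace (- t + t + / 2 * (- x * y - x * - y)) with 0 by ring.
  replace (0^2+0^2) with 0 by ring. rewrite Rabs_R0, sqrt_0. apply Rmax_left; lra.
Qed.

Lemma in_Nbhd_of (L : Hpt -> Prop) lam p q : L q -> Hd p q <= lam -> in_Nbhd L lam p.
Proof. intros Hq Hd' eta He. exists q. split; auto. lra. Qed.

Lemma in_Nbhd_tri (L : Hpt -> Prop) lam mu p p' :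
  in_Nbhd L lam p -> Hd p' p <= mu -> in_Nbhd L (lam + mu) p'.
Proof.
  intros H Hpp eta He. destruct (H eta He) as [q [Lq Hq]]. exists q. split; auto.
  pose proof (Hd_tri p' p q). lra.
Qed.

Lemma in_Nbhd_mono (L : Hpt -> Prop) lam lam' p : lam <= lam' -> in_Nbhd L lam p -> in_Nbhd L lam' p.
Proof. intros Hl H eta He. destruct (H eta He) as [q [Lq Hq]]. exists q; split; auto; lra. Qed.

Fixpoint sumn (f : nat -> R) (n : nat) : R :=
  match n with O => 0 | S n => sumn f n + f n end.

Lemma sumn_le (f g : nat -> R) n : (forall i, (i < n)%nat -> f i <= g i) -> sumn f n <= sumn g n.
Proof. induction n; simpl; intros H; [lra|]. pose proof (H n ltac:(lia)).
  assert (sumn f n <= sumn g n) by (apply IHn; intros; apply H; lia). lra. Qed.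

Lemma sumn_nonneg (f : nat -> R) n : (forall i, (i < n)%nat -> 0 <= f i) -> 0 <= sumn f n.
Proof. induction n; simpl; intros H; [lra|]. pose proof (H n ltac:(lia)).
  assert (0 <= sumn f n) by (apply IHn; intros; apply H; lia). lra. Qed.

Lemma sumn_mono (f : nat -> R) m n : (forall i, 0 <= f i) -> (m <= n)%nat -> sumn f m <= sumn f n.
Proof. intros H Hmn. induction Hmn; simpl; [lra|]. pose proof (H m0). lra. Qed.

Lemma sumn_plus (f g : nat -> R) n : sumn (fun i => f i + g i) n = sumn f n + sumn g n.
Proof. induction n; simpl; [lra|]. rewrite IHn. lra. Qed.

Lemma sumn_scal (c : R) (f : nat -> R) n : sumn (fun i => c * f i) n = c * sumn f n.
Proof. induction n; simpl; [lra|]. rewrite IHn. lra. Qed.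

Lemma sumn_ext (f g : nat -> R) n : (forall i, (i < n)%nat -> f i = g i) -> sumn f n = sumn g n.
Proof. induction n; simpl; intros H; [lra|]. rewrite IHn by (intros; apply H; lia).
  rewrite H by lia. lra. Qed.

Lemma sumn_abs (f : nat -> R) n : Rabs (sumn f n) <= sumn (fun i => Rabs (f i)) n.
Proof. induction n; simpl. rewrite Rabs_R0; lra.
  pose proof (Rabs_triang (sumn f n) (f n)). lra. Qed.

Definition en (x y : R) := sqrt (x^2 + y^2).

Lemma en_sq x y : en x y * en x y = x*x + y*y.
Proof. unfold en. rewrite sqrt_sqrt by nra. ring. Qed.

Lemma en_nonneg x y : 0 <= en x y.
Proof. apply sqrt_pos. Qed.

Lemma en_tri x1 y1 x2 y2 : en (x1+x2) (y1+y2) <= en x1 y1 + en x2 y2.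
Proof.
  pose proof (en_sq x1 y1). pose proof (en_sq x2 y2).
  pose proof (en_nonneg x1 y1). pose proof (en_nonneg x2 y2).
  destruct (cs_ineq x1 y1 x2 y2 (en x1 y1) (en x2 y2)) as [C1 _]; try lra.
  apply Rabs_le_between in C1.
  unfold en at 1. apply sqrt_le_c; [lra|]. nra.
Qed.

Lemma Hnorm_en x y t : en x y <= Hnorm (x,y,t).
Proof. apply (Hnorm_ge x y t). Qed.

Lemma sq_le_of_le a b : 0 <= a -> a <= b -> a*a <= b*b.
Proof. intros; nra. Qed.

Lemma sum_prefix_prod (c : nat -> R) n : (forall i, 0 <= c i) ->
  sumn (fun i => sumn c i * c i) n <= sumn c n * sumn c n / 2.
Proof.
  intros Hc. induction n; simpl; [lra|].
  pose proof (Hc n). nra.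
Qed.

Lemma ellipse (u v a b D S : R) : 0 <= u -> 0 <= v -> u*u = a*a+b*b ->
  v*v = (D-a)*(D-a)+b*b -> u+v <= S -> 4*(b*b) <= S*S - D*D.
Proof.
  intros Hu Hv E1 E2 H.
  assert (HS: (u+v)*(u+v) <= S*S) by (apply sq_le_of_le; lra).
  assert (UV: a*(D-a) + b*b <= u*v).
  { destruct (Rle_lt_dec (a*(D-a)+b*b) 0) as [N|P]. nra.
    assert ((a*(D-a)+b*b)*(a*(D-a)+b*b) <= (u*v)*(u*v)).
    { replace ((u*v)*(u*v)) with ((u*u)*(v*v)) by ring. rewrite E1, E2.
      pose proof (pow2_ge_0 (a*b - (D-a)*b)). simpl in *. nra. }
    assert (0 <= u*v) by nra. nra. }
  nra.
Qed.

Section Core.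
Variables (x y t : nat -> R) (N : nat).
Hypotheses (Hx0 : x 0%nat = 0) (Hy0 : y 0%nat = 0) (Ht0 : t 0%nat = 0).

Definition P j : Hpt := (x j, y j, t j).
Definition wx j := x (S j) - x j.
Definition wy j := y (S j) - y j.
Definition tau j := t (S j) - t j - /2 * (x j * y (S j) - x (S j) * y j).
Definition dd j := Hd (P (S j)) (P j).
Definition W j := en (wx j) (wy j).

Lemma dd_eq j : dd j = Hnorm (wx j, wy j, tau j).
Proof. unfold dd, Hd, P, Hmul, Hinv, wx, wy, tau. f_equal. f_equal; [f_equal|]; ring. Qed.

Lemma W_le_dd j : W j <= dd j.
Proof. rewrite dd_eq. apply Hnorm_en. Qed.

Lemma tau_le_dd j : Rabs (tau j) <= dd j * dd j.
Proof. rewrite dd_eq. apply Hnorm_bounds. Qed.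

Lemma W_nonneg j : 0 <= W j.
Proof. apply en_nonneg. Qed.

Lemma chordA : forall j k, (j <= k)%nat -> en (x k - x j) (y k - y j) <= sumn W k - sumn W j.
Proof.
  intros j k Hjk. induction Hjk.
  - replace (x j - x j) with 0 by ring. replace (y j - y j) with 0 by ring.
    unfold en. replace (0^2+0^2) with 0 by ring. rewrite sqrt_0. lra.
  - simpl. pose proof (en_tri (x m - x j) (y m - y j) (wx m) (wy m)).
    unfold wx, wy in H. replace (x m - x j + (x (S m) - x m)) with (x (S m) - x j) in H by ring.
    replace (y m - y j + (y (S m) - y m)) with (y (S m) - y j) in H by ring.
    change (en (x (S m) - x m) (y (S m) - y m)) with (W m) in H. lra.
Qed.

Lemma en0 k : en (x k) (y k) <= sumn W k.
Proof. pose proof (chordA 0 k ltac:(lia)). rewrite Hx0, Hy0 in H. simpl in H.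
  replace (x k - 0) with (x k) in H by ring. replace (y k - 0) with (y k) in H by ring. lra. Qed.

Lemma tbound : forall j, Rabs (t j) <= sumn (fun i => Rabs (tau i)) j + /2 * sumn (fun i => sumn W i * W i) j.
Proof.
  induction j; simpl. rewrite Ht0, Rabs_R0. lra.
  assert (E: t (S j) = t j + tau j + /2 * (x j * wy j - wx j * y j)).
  { unfold tau, wx, wy. field. }
  rewrite E.
  pose proof (en_sq (x j) (y j)). pose proof (en_sq (wx j) (wy j)).
  pose proof (en_nonneg (x j) (y j)). pose proof (en_nonneg (wx j) (wy j)).
  destruct (cs_ineq (x j) (y j) (wx j) (wy j) (en (x j) (y j)) (en (wx j) (wy j))) as [_ C2]; try lra.
  pose proof (en0 j). fold (W j) in *. pose proof (W_nonneg j).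
  assert (Rabs (x j * wy j - wx j * y j) <= sumn W j * W j).
  { eapply Rle_trans; [apply C2|]. apply Rmult_le_compat_r; auto. }
  pose proof (Rabs_triang (t j + tau j) (/2 * (x j * wy j - wx j * y j))).
  pose proof (Rabs_triang (t j) (tau j)).
  match goal with |- Rabs (_ + ?z) <= _ => assert (Rabs z <= /2 * (sumn W j * W j)) end.
  { rewrite Rabs_mult. rewrite (Rabs_pos_eq (/2)) by lra. lra. }
  lra.
Qed.

Variables (D delta e kappa lam : R).
Hypotheses (HD : Hnorm (P N) = D) (HDpos : 0 < D) (Hdel0 : 0 <= delta) (Hdel : delta <= D/2)
  (He0 : 0 <= e) (He : e <= D/8) (Hk0 : 0 <= kappa) (Hk : D*delta <= kappa*kappa)
  (Hkl : kappa <= lam) (Hlam : (e + kappa) * (D + delta) <= lam * lam)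
  (Hchain : sumn dd N <= D + delta) (Hstep : forall j, (j < N)%nat -> dd j <= e).

Lemma Lw_le : sumn W N <= D + delta.
Proof. pose proof (sumn_le W dd N (fun i _ => W_le_dd i)). lra. Qed.

Lemma tau_sum : forall j, (j <= N)%nat -> sumn (fun i => Rabs (tau i)) j <= e * (D + delta).
Proof.
  intros j Hj. apply Rle_trans with (sumn (fun i => e * dd i) j).
  - apply sumn_le. intros i Hi. pose proof (tau_le_dd i). pose proof (Hstep i ltac:(lia)).
    assert (0 <= dd i) by apply Hd_nonneg. nra.
  - rewrite sumn_scal. apply Rmult_le_compat_l; auto.
    pose proof (sumn_mono dd j N (fun i => Hd_nonneg _ _) Hj). lra.
Qed.

Lemma tN_small : Rabs (t N) < D * D.
Proof.
  pose proof (tbound N). pose proof (tau_sum N (le_n _)).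
  pose proof (sum_prefix_prod W N W_nonneg). pose proof Lw_le.
  assert (0 <= sumn W N) by (apply sumn_nonneg; intros; apply W_nonneg).
  assert (sumn W N * sumn W N <= (D+delta)*(D+delta)) by (apply sq_le_of_le; lra).
  nra.
Qed.

Lemma enN : en (x N) (y N) = D.
Proof.
  pose proof HD as H. unfold P, Hnorm in H. fold (en (x N) (y N)) in H.
  unfold Rmax in H. destruct (Rle_dec (en (x N) (y N)) (sqrt (Rabs (t N)))); auto.
  exfalso. pose proof tN_small. rewrite <- H in H0.
  rewrite sqrt_sqrt in H0 by apply Rabs_pos. lra.
Qed.

Definition ux := x N / D.
Definition uy := y N / D.

Lemma Hu : ux*ux + uy*uy = 1.
Proof. pose proof (en_sq (x N) (y N)). rewrite enN in H. unfold ux, uy.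
  transitivity ((x N * x N + y N * y N)/(D*D)); [field; lra|]. rewrite <- H. field. lra. Qed.

Lemma XD : x N = D * ux.
Proof. unfold ux. field. lra. Qed.
Lemma YD : y N = D * uy.
Proof. unfold uy. field. lra. Qed.

Definition aa j := x j * ux + y j * uy.
Definition bb j := ux * y j - x j * uy.

Lemma bb_small j : (j <= N)%nat -> bb j * bb j <= kappa * kappa.
Proof.
  intros Hj.
  pose proof (en0 j). pose proof (chordA j N Hj). pose proof Lw_le.
  pose proof (en_sq (x j) (y j)). pose proof (en_sq (x N - x j) (y N - y j)).
  pose proof (en_nonneg (x j) (y j)). pose proof (en_nonneg (x N - x j) (y N - y j)).
  pose proof Hu.
  assert (E1 : en (x j) (y j) * en (x j) (y j) = aa j * aa j + bb j * bb j).
  { rewrite H2. transitivity ((x j * x j + y j * y j) * (ux*ux+uy*uy)); [rewrite H6; ring|].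
    unfold aa, bb; ring. }
  assert (E2 : en (x N - x j) (y N - y j) * en (x N - x j) (y N - y j) = (D - aa j) * (D - aa j) + bb j * bb j).
  { rewrite H3, XD, YD.
    transitivity (D*D*(ux*ux+uy*uy) - 2*D*aa j + (x j * x j + y j * y j)); [unfold aa; ring|].
    transitivity (D*D - 2*D*aa j + (x j * x j + y j * y j)*(ux*ux+uy*uy)); [rewrite H6; ring|].
    unfold aa, bb; ring. }
  pose proof (ellipse _ _ _ _ D (D+delta) H4 H5 E1 E2 ltac:(lra)). nra.
Qed.

Lemma da_le j : Rabs (aa (S j) - aa j) <= W j.
Proof.
  pose proof Hu. pose proof (en_sq (wx j) (wy j)). pose proof (en_nonneg (wx j) (wy j)).
  destruct (cs_ineq (wx j) (wy j) ux uy (en (wx j) (wy j)) 1) as [C1 _]; try lra.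
  assert (E : aa (S j) - aa j = wx j * ux + wy j * uy) by (unfold aa, wx, wy; ring).
  rewrite E. fold (W j) in C1. lra.
Qed.

Definition VV j := t j - /2 * (aa j * bb j).

Lemma VV_step j : VV (S j) - VV j = tau j - /2 * (bb j + bb (S j)) * (aa (S j) - aa j).
Proof.
  pose proof Hu.
  assert (Om : aa j * bb (S j) - bb j * aa (S j) = x j * y (S j) - x (S j) * y j).
  { transitivity ((x j * y (S j) - x (S j) * y j) * (ux*ux+uy*uy)); [unfold aa, bb; ring|].
    rewrite H; ring. }
  unfold VV, tau. rewrite <- Om. ring.
Qed.

Lemma VV_bound : forall j, (j <= N)%nat -> Rabs (VV j) <= sumn (fun i => Rabs (tau i) + kappa * W i) j.
Proof.
  induction j; intros Hj; simpl.
  - unfold VV, aa, bb. rewrite Hx0, Hy0, Ht0.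
    replace (0 - / 2 * ((0 * ux + 0 * uy) * (ux * 0 - 0 * uy))) with 0 by ring.
    rewrite Rabs_R0; lra.
  - replace (VV (S j)) with (VV j + (VV (S j) - VV j)) by ring. rewrite VV_step.
    pose proof (IHj ltac:(lia)).
    pose proof (bb_small j ltac:(lia)). pose proof (bb_small (S j) Hj).
    assert (B1: Rabs (bb j) <= kappa) by (apply abs_le_of_sq; auto).
    assert (B2: Rabs (bb (S j)) <= kappa) by (apply abs_le_of_sq; auto).
    pose proof (da_le j).
    assert (Rabs (/2 * (bb j + bb (S j)) * (aa (S j) - aa j)) <= kappa * W j).
    { rewrite !Rabs_mult, (Rabs_pos_eq (/2)) by lra.
      pose proof (Rabs_triang (bb j) (bb (S j))). pose proof (Rabs_pos (aa (S j) - aa j)).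
      pose proof (Rabs_pos (bb j + bb (S j))).
      apply Rle_trans with (/2 * (2*kappa) * W j); [|lra].
      apply Rmult_le_compat; try lra. }
    pose proof (Rabs_triang (VV j) (tau j - / 2 * (bb j + bb (S j)) * (aa (S j) - aa j))) as T1.
    pose proof (Rabs_triang (tau j) (- (/ 2 * (bb j + bb (S j)) * (aa (S j) - aa j)))) as T2.
    rewrite Rabs_Ropp in T2.
    replace (tau j - / 2 * (bb j + bb (S j)) * (aa (S j) - aa j)) with (tau j + - (/ 2 * (bb j + bb (S j)) * (aa (S j) - aa j))) in * by ring.
    lra.
Qed.

Lemma flat_core : (ux <> 0 \/ uy <> 0) /\
  forall j, (j <= N)%nat -> Hd (P j) (aa j * ux, aa j * uy, 0) <= lam.
Proof.
  pose proof Hu as H. split.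
  { destruct (Req_dec ux 0); destruct (Req_dec uy 0); auto. exfalso.
    rewrite H0, H1 in H. lra. }
  intros j Hj. unfold Hd, P, Hmul, Hinv.
  apply Hnorm_le.
  - pose proof (sumn_nonneg W N (fun i _ => W_nonneg i)). lra.
  - replace ((- (aa j * ux) + x j) * (- (aa j * ux) + x j) + (- (aa j * uy) + y j) * (- (aa j * uy) + y j))
      with (bb j * bb j + (1 - (ux*ux+uy*uy)) * (x j * x j + y j * y j - aa j * aa j)) by (unfold aa, bb; ring).
    rewrite H. 
    pose proof (bb_small j Hj). assert (kappa * kappa <= lam * lam) by (apply sq_le_of_le; lra). lra.
  - replace (- 0 + t j + / 2 * (- (aa j * ux) * y j - x j * - (aa j * uy))) with (VV j) by (unfold VV, bb; ring).
    pose proof (VV_bound j Hj). rewrite sumn_plus, sumn_scal in H0.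
    pose proof (tau_sum j Hj). pose proof (sumn_mono W j N W_nonneg Hj). pose proof Lw_le.
    assert (kappa * sumn W j <= kappa * (D+delta)) by (apply Rmult_le_compat_l; lra). nra.
Qed.

End Core.

Lemma Rdiv_le_0_compat a b : 0 <= a -> 0 < b -> 0 <= a / b.
Proof. intros. unfold Rdiv. apply Rmult_le_pos; auto. left; apply Rinv_0_lt_compat; auto. Qed.

Lemma div_le_mul a b c : 0 < b -> a / b <= c -> a <= c * b.
Proof. intros Hb H. apply Rmult_le_compat_r with (r := b) in H; [|lra].
  unfold Rdiv in H. rewrite Rmult_assoc, Rinv_l in H by lra. lra. Qed.

Lemma nat_above r : exists n : nat, r < INR n.
Proof. destruct (INR_archimed 1 r ltac:(lra)) as [n Hn]. exists n. lra. Qed.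

Lemma near_nat : forall N u, 0 <= u <= INR N -> exists j, (j <= N)%nat /\ Rabs (u - INR j) <= 1.
Proof.
  induction N; intros u Hu.
  - exists 0%nat. split; auto. simpl in *. replace (u - 0) with u by ring.
    rewrite Rabs_pos_eq; lra.
  - destruct (Rle_lt_dec u (INR N)) as [H|H].
    + destruct (IHN u) as [j [Hj1 Hj2]]; [lra|]. exists j; split; auto.
    + exists (S N). split; auto. rewrite S_INR in *. apply Rabs_le; lra.
Qed.

Definition ptN (a G : R) (N : nat) (j : nat) : R := a + INR j * (G / INR N).

Definition chainS (g : R -> Hpt) (a G : R) (N : nat) : R :=
  sumn (fun w => Hd (g (ptN a G N (S w))) (g (ptN a G N w))) N.

Definition chainX (g : R -> Hpt) (a G : R) (N : nat) : R :=
  chainS g a G N - Hd (g (a + G)) (g a).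

Definition lipline (M : R) (g : R -> Hpt) : Prop :=
  forall u v, Hd (g u) (g v) <= M * Rabs (u - v) /\ / M * Rabs (u - v) <= Hd (g u) (g v).

Lemma Hmul_inv_l_pt (p : Hpt) : Hmul (Hinv p) p = (0,0,0).
Proof. destruct p as [[a b] c]. unfold Hmul, Hinv. f_equal; [f_equal|]; ring. Qed.

Lemma Hmul_inv_cancel (p q : Hpt) : Hmul p (Hmul (Hinv p) q) = q.
Proof. destruct p as [[a b] c]; destruct q as [[a' b'] c']. unfold Hmul, Hinv. f_equal; [f_equal|]; field. Qed.

Lemma triple_eta (q : Hpt) : (fst (fst q), snd (fst q), snd q) = q.
Proof. destruct q as [[a b] c]. reflexivity. Qed.

Lemma flat_curve (M rho1 : R) : 1 <= M -> 0 < rho1 ->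
  exists N0 : nat, exists delta1, 0 < delta1 /\
  forall N, (N0 <= N)%nat -> forall g, lipline M g -> forall a G, 0 < G ->
  chainX g a G N < delta1 * G ->
  exists L, H_horizontal_line L /\ forall y, a <= y <= a + G -> in_Nbhd L (rho1 * G) (g y).
Proof.
  intros HM Hr.
  set (k0 := Rmin (Rmin (rho1/2) (rho1*rho1/(16*M))) (1/2)).
  assert (Hk0p : 0 < k0).
  { unfold k0. apply Rmin_pos; [apply Rmin_pos|]; try lra. apply Rdiv_lt_0_compat; nra. }
  assert (Hk1 : k0 <= rho1/2) by (unfold k0; eapply Rle_trans; [apply Rmin_l|apply Rmin_l]).
  assert (Hk2 : k0 <= rho1*rho1/(16*M)) by (unfold k0; eapply Rle_trans; [apply Rmin_l|apply Rmin_r]).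
  assert (Hk3 : k0 <= 1/2) by (unfold k0; apply Rmin_r).
  destruct (nat_above (8*M*M + 2*M/rho1 + 16*M*M/(rho1*rho1))) as [N0 HN0].
  exists N0, (k0*k0/M). split; [apply Rdiv_lt_0_compat; nra|].
  intros N HN g Hg a G HG Hchain.
  assert (HNr : INR N0 <= INR N) by (apply le_INR; auto).
  assert (H2M : 0 <= 2*M/rho1) by (apply Rdiv_le_0_compat; lra).
  assert (H16 : 0 <= 16*M*M/(rho1*rho1)) by (apply Rdiv_le_0_compat; nra).
  assert (HMM : 8 <= 8*M*M) by nra.
  assert (HNpos : 0 < INR N) by lra.
  assert (HN1 : 8*M*M <= INR N) by lra.
  assert (HN2 : 2*M/rho1 <= INR N) by lra.
  assert (HN3 : 16*M*M/(rho1*rho1) <= INR N) by lra.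
  set (h := G / INR N).
  assert (Hh : 0 < h) by (apply Rdiv_lt_0_compat; lra).
  assert (HhN : INR N * h = G) by (unfold h; field; lra).
  set (p := fun j => g (ptN a G N j)).
  set (Pr := fun j => Hmul (Hinv (p 0%nat)) (p j)).
  set (x := fun j => fst (fst (Pr j))).
  set (y := fun j => snd (fst (Pr j))).
  set (t := fun j => snd (Pr j)).
  assert (HP : forall j, P x y t j = Pr j) by (intros; unfold P, x, y, t; apply triple_eta).
  assert (Hp0 : Pr 0%nat = (0,0,0)) by (unfold Pr; apply Hmul_inv_l_pt).
  assert (Hx0 : x 0%nat = 0) by (unfold x; rewrite Hp0; reflexivity).
  assert (Hy0 : y 0%nat = 0) by (unfold y; rewrite Hp0; reflexivity).
  assert (Ht0 : t 0%nat = 0) by (unfold t; rewrite Hp0; reflexivity).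
  assert (Hdd : forall j, dd x y t j = Hd (p (S j)) (p j)).
  { intros j. unfold dd. rewrite !HP. unfold Pr. apply Hd_left. }
  assert (Hpa : p 0%nat = g a) by (unfold p, ptN; f_equal; simpl; ring).
  assert (HpN : p N = g (a + G)) by (unfold p, ptN; f_equal; fold h; rewrite HhN; ring).
  set (D := Hd (p N) (p 0%nat)).
  assert (HD : Hnorm (P x y t N) = D) by (rewrite HP; reflexivity).
  assert (HDb : G / M <= D /\ D <= M * G).
  { unfold D. rewrite HpN, Hpa. destruct (Hg (a+G) a) as [U V].
    replace (a + G - a) with G in * by ring. rewrite Rabs_pos_eq in * by lra.
    split; [|lra]. unfold Rdiv. rewrite Rmult_comm. lra. }
  assert (HGM : G / M <= G) by (apply Rmult_le_reg_r with M; [lra|]; unfold Rdiv; rewrite Rmult_assoc, Rinv_l by lra; nra).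
  assert (HGMp : 0 < G / M) by (apply Rdiv_lt_0_compat; lra).
  set (delta := k0*k0/M*G).
  assert (Hdel0 : 0 <= delta) by (unfold delta; apply Rmult_le_pos; [apply Rdiv_le_0_compat|]; nra).
  assert (Hdel : delta <= D / 2).
  { unfold delta. assert (k0*k0 <= 1/4) by nra.
    assert (k0*k0/M*G <= 1/4 * (G/M)) by (unfold Rdiv; nra). lra. }
  set (e := M * h).
  assert (He0 : 0 <= e) by (unfold e; nra).
  assert (He : e <= D / 8).
  { unfold e. assert (M*h <= G/(8*M)).
    { unfold h. apply Rmult_le_reg_r with (8*M*INR N); [nra|].
      field_simplify; try lra. replace (M * G * (8*M)) with (8*M*M*G) by ring. nra. }
    assert (G/(8*M) = (G/M)/8) by (field; lra). lra. }
  set (kappa := k0 * G).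
  assert (Hk0 : 0 <= kappa) by (unfold kappa; nra).
  assert (Hk : D * delta <= kappa * kappa).
  { unfold delta, kappa. assert (D * (k0*k0/M*G) <= M*G*(k0*k0/M*G)).
    { apply Rmult_le_compat_r; [|lra]. apply Rmult_le_pos; [apply Rdiv_le_0_compat|]; nra. }
    assert (M*G*(k0*k0/M*G) = k0*G*(k0*G)) by (field; lra). lra. }
  set (lam := rho1 * G / 2).
  assert (Hkl : kappa <= lam) by (unfold kappa, lam; nra).
  assert (HDd : D + delta <= 2*M*G).
  { assert (delta <= G) by (unfold delta; assert (k0*k0 <= 1/4) by nra; assert (k0*k0/M <= 1/4) by (apply Rmult_le_reg_r with M; [lra|]; unfold Rdiv; rewrite Rmult_assoc, Rinv_l by lra; nra); nra). nra. }
  assert (Hlam : (e + kappa) * (D + delta) <= lam * lam).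
  { assert (Hmh : M*h <= rho1*rho1/(16*M) * G).
    { unfold h. apply Rmult_le_reg_r with (16*M*INR N); [nra|].
      field_simplify; try lra. 
      assert (16*M*M <= INR N * (rho1*rho1)).
      { apply div_le_mul; [nra|]. lra. }
      nra. }
    assert (e + kappa <= rho1*rho1/(8*M) * G).
    { unfold e, kappa. assert (k0 * G <= rho1*rho1/(16*M)*G) by nra.
      assert (rho1*rho1/(8*M) = 2*(rho1*rho1/(16*M))) by (field; lra). nra. }
    assert (0 <= e + kappa) by lra.
    apply Rle_trans with (rho1*rho1/(8*M)*G * (2*M*G)).
    { apply Rmult_le_compat; auto. pose proof HDb; lra. }
    unfold lam. right. field. lra. }
  assert (Hch : sumn (dd x y t) N <= D + delta).
  { rewrite (sumn_ext _ (fun w => Hd (g (ptN a G N (S w))) (g (ptN a G N w)))) by (intros; rewrite Hdd; reflexivity).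
    unfold chainX in Hchain. fold (chainS g a G N). unfold D. rewrite HpN, Hpa. unfold delta.
    replace (k0*k0/M*G) with (k0*k0/M*G) by ring. lra. }
  assert (Hst : forall j, (j < N)%nat -> dd x y t j <= e).
  { intros j _. rewrite Hdd. unfold p. destruct (Hg (ptN a G N (S j)) (ptN a G N j)) as [U _].
    unfold ptN in U. rewrite S_INR in U. fold h in U.
    replace (a + (INR j + 1) * h - (a + INR j * h)) with h in U by ring. rewrite Rabs_pos_eq in U by lra.
    unfold ptN. rewrite S_INR. fold h. unfold e. lra. }
  destruct (flat_core x y t N Hx0 Hy0 Ht0 D delta e kappa lam HD ltac:(lra) Hdel0 Hdel He0 He Hk0 Hk Hkl Hlam Hch Hst)
    as [Hne Hfl].
  set (ux0 := ux x N D). set (uy0 := uy y N D).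
  exists (fun q => exists s, q = Hmul (p 0%nat) (s * ux0, s * uy0, 0)).
  split.
  { exists (p 0%nat), ux0, uy0. split; auto. intros q. split; auto. }
  intros z Hz.
  destruct (near_nat N ((z - a) / h)) as [j [Hj Hjz]].
  { split. apply Rdiv_le_0_compat; lra. apply Rmult_le_reg_r with h; auto.
    unfold Rdiv. rewrite Rmult_assoc, Rinv_l by lra. lra. }
  apply in_Nbhd_of with (Hmul (p 0%nat) (aa x y N D j * ux0, aa x y N D j * uy0, 0)).
  { exists (aa x y N D j). reflexivity. }
  pose proof (Hfl j Hj) as Hf. rewrite HP in Hf. unfold Pr in Hf.
  rewrite <- (Hd_left (p 0%nat)) in Hf. rewrite Hmul_inv_cancel in Hf.
  pose proof (Hd_tri (g z) (p j) (Hmul (p 0%nat) (aa x y N D j * ux0, aa x y N D j * uy0, 0))).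
  assert (Hd (g z) (p j) <= rho1 * G / 2).
  { unfold p, ptN. fold h. destruct (Hg z (a + INR j * h)) as [U _].
    assert (Rabs (z - (a + INR j * h)) <= h).
    { replace (z - (a + INR j * h)) with (((z-a)/h - INR j) * h) by (field; lra).
      rewrite Rabs_mult, (Rabs_pos_eq h) by lra. nra. }
    assert (M * h <= rho1 * G / 2).
    { unfold h. apply Rmult_le_reg_r with (2*INR N); [lra|]. field_simplify; try lra.
      assert (2*M <= INR N * rho1).
      { apply div_le_mul; [lra|]. lra. }
      replace (G * INR N * rho1) with (G * (INR N * rho1)) by ring.
      replace (2 * M * G) with (G * (2*M)) by ring. apply Rmult_le_compat_l; lra. }
    apply Rle_trans with (M*h); [|lra]. eapply Rle_trans; [apply U|]. apply Rmult_le_compat_l; lra. }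
  unfold lam in Hf. fold ux0 uy0 in Hf. lra.
Qed.

Lemma sumn_split (F : nat -> R) n k : sumn F (n + k) = sumn F n + sumn (fun w => F (n + w)%nat) k.
Proof. induction k; simpl. rewrite Nat.add_0_r; lra. rewrite Nat.add_succ_r. simpl. rewrite IHk. lra. Qed.

Lemma sumn_regroup (F : nat -> R) A B :
  sumn (fun u => sumn (fun w => F (u*B + w)%nat) B) A = sumn F (A*B).
Proof. induction A; simpl; auto. rewrite IHA. replace (B + A*B)%nat with (A*B + B)%nat by lia.
  rewrite sumn_split. reflexivity. Qed.

Lemma sumn_telescope (T : nat -> R) m : sumn (fun u => T (S u) - T u) m = T m - T 0%nat.
Proof. induction m; simpl; [lra|]. rewrite IHm. lra. Qed.

Lemma sumn_minus (f g : nat -> R) n : sumn f n - sumn g n = sumn (fun i => f i - g i) n.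
Proof. induction n; simpl; [lra|]. rewrite <- IHn. lra. Qed.

Lemma sumn_const (c : R) n : sumn (fun _ => c) n = INR n * c.
Proof. induction n; simpl; [lra|]. rewrite IHn. destruct n; simpl; lra. Qed.

Lemma sumn_shift_diff (Sq : nat -> R) m n :
  sumn (fun d => Sq (d+m)%nat - Sq d) n = sumn (fun u => Sq (n+u)%nat) m - sumn Sq m.
Proof.
  induction n; simpl.
  - rewrite (sumn_ext (fun u => Sq (0+u)%nat) Sq) by (intros; f_equal). lra.
  - rewrite IHn.
    assert (sumn (fun u => Sq (S n + u)%nat) m - sumn (fun u => Sq (n+u)%nat) m = Sq (n+m)%nat - Sq n).
    { rewrite sumn_minus.
      rewrite (sumn_ext _ (fun u => (fun k => Sq (n+k)%nat) (S u) - (fun k => Sq (n+k)%nat) u))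
        by (intros i _; simpl; replace (n + S i)%nat with (S (n + i))%nat by lia; reflexivity).
      rewrite (sumn_telescope (fun k => Sq (n+k)%nat)). simpl. rewrite Nat.add_0_r. reflexivity. }
    simpl in H. lra.
Qed.

Lemma telescope_bound (Sq : nat -> R) (B : R) m n :
  (forall d, 0 <= Sq d <= B) -> sumn (fun d => Sq (d+m)%nat - Sq d) n <= INR m * B.
Proof.
  intros HS. rewrite sumn_shift_diff.
  assert (sumn (fun u => Sq (n+u)%nat) m <= sumn (fun _ => B) m) by (apply sumn_le; intros; apply HS).
  assert (0 <= sumn Sq m) by (apply sumn_nonneg; intros; apply HS).
  rewrite sumn_const in H. lra.
Qed.

Lemma chain_ge_chord (p : nat -> Hpt) n : Hd (p n) (p 0%nat) <= sumn (fun w => Hd (p (S w)) (p w)) n.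
Proof. induction n; simpl. rewrite Hd_refl; lra. pose proof (Hd_tri (p (S n)) (p n) (p 0%nat)). lra. Qed.

Lemma chainX_nonneg g a G N : (0 < N)%nat -> 0 <= chainX g a G N.
Proof.
  intros HN. unfold chainX, chainS.
  pose proof (chain_ge_chord (fun w => g (ptN a G N w)) N). simpl in H.
  assert (E1 : ptN a G N N = a + G) by (unfold ptN; field; apply not_0_INR; lia).
  assert (E2 : ptN a G N 0 = a) by (unfold ptN; simpl; ring).
  rewrite E1, E2 in H. lra.
Qed.

Definition gpt (al H0 : R) (d v : nat) : R := al + INR v * (H0 / 2^d).

Definition Sd (g : R -> Hpt) (al H0 : R) (Wc : nat) (d : nat) : R :=
  sumn (fun v => Hd (g (gpt al H0 d (S v))) (g (gpt al H0 d v))) (Wc * 2^d).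

Definition Xc (g : R -> Hpt) (al H0 : R) (m d u : nat) : R :=
  chainX g (gpt al H0 d u) (H0 / 2^d) (2^m).

Lemma pow2_INR n : INR (2^n) = 2^n.
Proof. rewrite pow_INR. simpl. f_equal; lra. Qed.

Lemma pow2_pos n : 0 < 2^n.
Proof. apply pow_lt; lra. Qed.

Lemma Xc_sum g al H0 Wc m d :
  sumn (fun u => Xc g al H0 m d u) (Wc * 2^d) = Sd g al H0 Wc (d+m) - Sd g al H0 Wc d.
Proof.
  unfold Xc, chainX, Sd. unfold Rminus. rewrite sumn_plus.
  f_equal.
  - unfold chainS. rewrite Nat.pow_add_r, Nat.mul_assoc, <- (sumn_regroup _ (Wc*2^d) (2^m)).
    apply sumn_ext. intros u _. apply sumn_ext. intros w _.
    assert (E : forall k, ptN (gpt al H0 d u) (H0 / 2 ^ d) (2 ^ m) k = gpt al H0 (d+m) (u * 2^m + k)).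
    { intros k. unfold ptN, gpt. rewrite pow2_INR, plus_INR, mult_INR, pow2_INR, pow_add.
      field. split; apply pow_nonzero; lra. }
    rewrite !E. replace (u * 2^m + S w)%nat with (S (u * 2^m + w)) by lia. reflexivity.
  - replace (- sumn (fun v : nat => Hd (g (gpt al H0 d (S v))) (g (gpt al H0 d v))) (Wc * 2 ^ d))
      with (-1 * sumn (fun v : nat => Hd (g (gpt al H0 d (S v))) (g (gpt al H0 d v))) (Wc * 2 ^ d)) by ring.
    rewrite <- sumn_scal. apply sumn_ext. intros v _. unfold gpt. rewrite S_INR.
    replace (al + INR v * (H0 / 2 ^ d) + H0 / 2 ^ d) with (al + (INR v + 1) * (H0 / 2 ^ d)) by ring. ring.
Qed.

Lemma Sd_bound g (M al H0 : R) Wc d : 0 <= H0 -> 0 <= M ->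
  (forall u v, Hd (g u) (g v) <= M * Rabs (u - v)) ->
  0 <= Sd g al H0 Wc d <= INR Wc * M * H0.
Proof.
  intros HH HM Hg. unfold Sd. split.
  - apply sumn_nonneg. intros; apply Hd_nonneg.
  - apply Rle_trans with (sumn (fun _ => M * (H0 / 2^d)) (Wc * 2^d)).
    + apply sumn_le. intros v _. eapply Rle_trans; [apply Hg|]. unfold gpt. rewrite S_INR.
      replace (al + (INR v + 1) * (H0 / 2 ^ d) - (al + INR v * (H0 / 2 ^ d))) with (H0 / 2^d) by ring.
      rewrite Rabs_pos_eq; [lra|]. apply Rdiv_le_0_compat; auto. apply pow2_pos.
    + rewrite <- (Rmult_1_r (M * (H0/2^d))). rewrite sumn_scal.
      rewrite sumn_const, Rmult_1_r, mult_INR, pow2_INR. right. field. apply pow_nonzero; lra.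
Qed.

Lemma line_pack g (M al H0 : R) Wc m Dm : 0 <= H0 -> 0 <= M ->
  (forall u v, Hd (g u) (g v) <= M * Rabs (u - v)) ->
  sumn (fun d => sumn (fun u => Xc g al H0 m d u) (Wc * 2^d)) Dm <= INR m * (INR Wc * M * H0).
Proof.
  intros HH HM Hg.
  rewrite (sumn_ext _ (fun d => Sd g al H0 Wc (d+m) - Sd g al H0 Wc d)) by (intros; apply Xc_sum).
  apply telescope_bound. intros; apply Sd_bound; auto.
Qed.

Definition indR (P : Prop) : R := if excluded_middle_informative P then 1 else 0.

Lemma ind_T (P : Prop) : P -> indR P = 1.
Proof. intros H. unfold indR. destruct (excluded_middle_informative P); tauto. Qed.
Lemma ind_F (P : Prop) : ~ P -> indR P = 0.
Proof. intros H. unfold indR. destruct (excluded_middle_informative P); tauto. Qed.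
Lemma ind_01 (P : Prop) : 0 <= indR P <= 1.
Proof. unfold indR. destruct (excluded_middle_informative P); lra. Qed.
Lemma ind_mono (P Q : Prop) : (P -> Q) -> indR P <= indR Q.
Proof. intros H. unfold indR. destruct (excluded_middle_informative P); destruct (excluded_middle_informative Q); try lra. tauto. Qed.

Lemma count_upper (A B : R) : forall N, sumn (fun i => indR (A <= INR i <= B)) N <= Rmax 0 (Rmin B (INR N - 1) - A + 1).
Proof.
  induction N; cbn [sumn].
  - apply Rmax_l.
  - destruct (excluded_middle_informative (A <= INR N <= B)) as [H|H].
    + rewrite ind_T by auto. 
      assert (Rmax 0 (Rmin B (INR N - 1) - A + 1) + 1 <= Rmax 0 (Rmin B (INR (S N) - 1) - A + 1)).
      { rewrite S_INR. replace (INR N + 1 - 1) with (INR N) by ring.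
        unfold Rmax, Rmin. repeat destruct Rle_dec; lra. }
      lra.
    + rewrite ind_F by auto.
      assert (Rmax 0 (Rmin B (INR N - 1) - A + 1) <= Rmax 0 (Rmin B (INR (S N) - 1) - A + 1)).
      { rewrite S_INR. unfold Rmax, Rmin. repeat destruct Rle_dec; lra. }
      lra.
Qed.

Lemma count_upper' (A B : R) N : sumn (fun i => indR (A <= INR i <= B)) N <= Rmax 0 (B - A + 1).
Proof. eapply Rle_trans; [apply count_upper|]. unfold Rmax, Rmin. repeat destruct Rle_dec; lra. Qed.

Lemma count_lower (A B : R) : 0 <= A -> forall N, Rmin B (INR N) - A - 1 <= sumn (fun i => indR (A <= INR i <= B)) N.
Proof.
  intros HA. induction N; cbn [sumn].
  - simpl. unfold Rmin; destruct Rle_dec; lra.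
  - rewrite S_INR.
    destruct (excluded_middle_informative (A <= INR N <= B)) as [H|H].
    + rewrite ind_T by auto. unfold Rmin in *. repeat destruct Rle_dec; lra.
    + rewrite ind_F by auto. pose proof (pos_INR N).
      assert (0 <= sumn (fun i => indR (A <= INR i <= B)) N) by (apply sumn_nonneg; intros; apply ind_01).
      unfold Rmin in *. repeat destruct Rle_dec; try lra.
Qed.

Lemma pow2_mod3 d : exists q c, (2^d = 3*q + c)%nat /\ (c = 1 \/ c = 2)%nat.
Proof.
  induction d.
  - exists 0%nat, 1%nat. simpl. split; auto.
  - destruct IHd as [q [c [E [C|C]]]]; subst.
    + exists (2*q)%nat, 2%nat. simpl. split; [lia|auto].
    + exists (2*q+1)%nat, 1%nat. simpl. split; [lia|auto].
Qed.

Lemma floor_ex (x : R) : exists i : Z, IZR i <= x < IZR i + 1.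
Proof. destruct (archimed x) as [H1 H2]. exists (up x - 1)%Z. rewrite minus_IZR. simpl. lra. Qed.

Lemma third_lemma (al0 H0 u1 u2 : R) (d : nat) : 0 < H0 ->
  u1 <= u2 -> u2 - u1 <= H0 / 2^d / 3 ->
  exists sg : bool, exists v : Z,
    (if sg then al0 - H0/3 else al0) + IZR v * (H0/2^d) <= u1 /\
    u2 <= (if sg then al0 - H0/3 else al0) + (IZR v + 1) * (H0/2^d).
Proof.
  intros HH Hu Hl. set (G := H0/2^d).
  assert (HG : 0 < G) by (unfold G; apply Rdiv_lt_0_compat; [lra|apply pow2_pos]).
  set (x := (u1 - al0)/G).
  assert (Hx : u1 = al0 + x * G) by (unfold x; field; lra).
  destruct (floor_ex x) as [i Hi].
  destruct (Rle_lt_dec (x - IZR i) (2/3)) as [C|C].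
  - exists false, i. simpl. split; [nra|]. fold G in Hl. nra.
  - destruct (pow2_mod3 d) as [q [c [E Hc]]].
    assert (E' : 2^d = 3 * INR q + INR c).
    { rewrite <- pow2_INR, E, plus_INR, mult_INR. simpl. ring. }
    assert (HH0 : H0 = (3 * INR q + INR c) * G) by (unfold G; rewrite <- E'; field; apply pow_nonzero; lra).
    exists true, (i + Z.of_nat q + 1)%Z. rewrite !plus_IZR, <- INR_IZR_INZ. simpl.
    fold G in Hl |- *.
    destruct Hc as [Hc|Hc]; subst c; simpl in HH0; rewrite HH0; split; nra.
Qed.

Lemma Z_to_nat_INR (v : Z) : 0 <= IZR v -> exists u : nat, INR u = IZR v /\ Z.of_nat u = v.
Proof. intros H. apply le_IZR in H. exists (Z.to_nat v). rewrite INR_IZR_INZ, Z2Nat.id by lia. auto. Qed.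

Lemma pRZ_shift (b : R) (n0 : Z) (d : nat) : b <> 0 ->
  powerRZ b (- (n0 + Z.of_nat d)) = powerRZ b (- n0) / b ^ d.
Proof.
  intros Hb. replace (- (n0 + Z.of_nat d))%Z with (- n0 + - Z.of_nat d)%Z by lia.
  rewrite powerRZ_add by auto. rewrite (powerRZ_neg' b (Z.of_nat d)), <- (pow_powerRZ b d). reflexivity.
Qed.

Lemma four_sq z : powerRZ 4 z = powerRZ 2 z * powerRZ 2 z.
Proof. replace 4 with (2*2) by ring. apply powerRZ_mult. Qed.

Lemma pow4 d : 4 ^ d = 2^d * 2^d.
Proof. rewrite <- Rpow_mult_distr. f_equal. Qed.

Lemma INR_pow4 d : INR (4^d) = 4^d.
Proof. rewrite pow_INR. f_equal. simpl. ring. Qed.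

Definition Qb (n0 k0 l0 : Z) (d i i' : nat) : dyadic :=
  (n0 + Z.of_nat d, k0 * Z.of_nat (2^d) + Z.of_nat i, l0 * Z.of_nat (4^d) + Z.of_nat i')%Z.

Lemma IZR_mul_pow2 k0 d : IZR (k0 * Z.of_nat (2^d)) = IZR k0 * 2^d.
Proof. rewrite mult_IZR, <- INR_IZR_INZ, pow2_INR. reflexivity. Qed.
Lemma IZR_mul_pow4 k0 d : IZR (k0 * Z.of_nat (4^d)) = IZR k0 * 4^d.
Proof. rewrite mult_IZR, <- INR_IZR_INZ, INR_pow4. reflexivity. Qed.

Lemma h_ge_2h (n n0 : Z) : (n < n0)%Z -> 2 * powerRZ 2 (- n0) <= powerRZ 2 (- n).
Proof.
  intros H. set (d := Z.to_nat (n0 - n)). assert (n0 = n + Z.of_nat d)%Z by (unfold d; lia).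
  rewrite H0, pRZ_shift by lra. assert (1 <= d)%nat by (unfold d; lia).
  assert (2 <= 2^d).
  { destruct d; [lia|]. simpl. pose proof (pow_le 2 d ltac:(lra)). assert (1 <= 2^d) by (apply pow_R1_Rle; lra). lra. }
  pose proof (powerRZ_lt 2 (-n) ltac:(lra)).
  set (X := powerRZ 2 (-n)) in *. assert (X / 2^d * 2^d = X) by (field; lra).
  assert (0 <= X / 2^d) by (apply Rdiv_le_0_compat; lra). nra.
Qed.

Lemma decode n k l n0 k0 l0 : dyadic_subset (n,k,l) (n0,k0,l0) ->
  exists d i i', (n,k,l) = Qb n0 k0 l0 d i i' /\ (i < 2^d)%nat /\ (i' < 4^d)%nat.
Proof.
  intros Hs.
  set (h := powerRZ 2 (-n)). set (h0 := powerRZ 2 (-n0)).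
  set (q := powerRZ 4 (-n)). set (q0 := powerRZ 4 (-n0)).
  assert (Hh : 0 < h) by (apply powerRZ_lt; lra). assert (Hh0 : 0 < h0) by (apply powerRZ_lt; lra).
  assert (Hq : 0 < q) by (apply powerRZ_lt; lra). assert (Hq0 : 0 < q0) by (apply powerRZ_lt; lra).
  assert (W1 := Hs (IZR k * h, IZR l * q)). simpl in W1. fold h q h0 q0 in W1.
  destruct W1 as [[A1 A2] [B1 B2]]; [split; split; nra|].
  assert (U1 : (IZR k + 1) * h <= (IZR k0 + 1) * h0).
  { destruct (Rle_lt_dec ((IZR k + 1) * h) ((IZR k0 + 1) * h0)) as [?|C]; auto. exfalso.
    assert (W := Hs (Rmax (IZR k * h) ((IZR k0 + 1) * h0), IZR l * q)). simpl in W. fold h q h0 q0 in W.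
    destruct W as [[W1 W2] _].
    - split; split; try nra. apply Rmax_l. unfold Rmax; destruct Rle_dec; nra.
    - pose proof (Rmax_r (IZR k * h) ((IZR k0 + 1) * h0)). lra. }
  assert (U2 : (IZR l + 1) * q <= (IZR l0 + 1) * q0).
  { destruct (Rle_lt_dec ((IZR l + 1) * q) ((IZR l0 + 1) * q0)) as [?|C]; auto. exfalso.
    assert (W := Hs (IZR k * h, Rmax (IZR l * q) ((IZR l0 + 1) * q0))). simpl in W. fold h q h0 q0 in W.
    destruct W as [_ [W1 W2]].
    - split; split; try nra. apply Rmax_l. unfold Rmax; destruct Rle_dec; nra.
    - pose proof (Rmax_r (IZR l * q) ((IZR l0 + 1) * q0)). lra. }
  assert (Hhh : h <= h0) by nra.
  assert (Hn : (n0 <= n)%Z).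
  { destruct (Z_lt_le_dec n n0) as [C|C]; auto. pose proof (h_ge_2h n n0 C). fold h h0 in H. lra. }
  set (d := Z.to_nat (n - n0)).
  assert (En : n = (n0 + Z.of_nat d)%Z) by (unfold d; lia).
  assert (Eh : h = h0 / 2^d) by (unfold h, h0; rewrite En; apply pRZ_shift; lra).
  assert (Eq : q = q0 / 4^d) by (unfold q, q0; rewrite En; apply pRZ_shift; lra).
  assert (P2 : 0 < 2^d) by apply pow2_pos. assert (P4 : 0 < 4^d) by (apply pow_lt; lra).
  assert (K1 : IZR k0 * 2^d <= IZR k).
  { rewrite Eh in A1. apply Rmult_le_reg_r with (h0 / 2^d). apply Rdiv_lt_0_compat; lra.
    replace (IZR k0 * 2^d * (h0/2^d)) with (IZR k0 * h0) by (field; lra). lra. }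
  assert (K2 : IZR k + 1 <= (IZR k0 + 1) * 2^d).
  { rewrite Eh in U1. apply Rmult_le_reg_r with (h0 / 2^d). apply Rdiv_lt_0_compat; lra.
    replace ((IZR k0 + 1) * 2^d * (h0/2^d)) with ((IZR k0 + 1) * h0) by (field; lra). lra. }
  assert (L1 : IZR l0 * 4^d <= IZR l).
  { rewrite Eq in B1. apply Rmult_le_reg_r with (q0 / 4^d). apply Rdiv_lt_0_compat; lra.
    replace (IZR l0 * 4^d * (q0/4^d)) with (IZR l0 * q0) by (field; lra). lra. }
  assert (L2 : IZR l + 1 <= (IZR l0 + 1) * 4^d).
  { rewrite Eq in U2. apply Rmult_le_reg_r with (q0 / 4^d). apply Rdiv_lt_0_compat; lra.
    replace ((IZR l0 + 1) * 4^d * (q0/4^d)) with ((IZR l0 + 1) * q0) by (field; lra). lra. }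
  assert (K1' : IZR (k0 * Z.of_nat (2^d)) <= IZR k) by (rewrite IZR_mul_pow2; lra).
  assert (K2' : IZR (k + 1) <= IZR (k0 * Z.of_nat (2^d) + Z.of_nat (2^d))).
  { rewrite !plus_IZR, IZR_mul_pow2, <- INR_IZR_INZ, pow2_INR. simpl. lra. }
  assert (L1' : IZR (l0 * Z.of_nat (4^d)) <= IZR l) by (rewrite IZR_mul_pow4; lra).
  assert (L2' : IZR (l + 1) <= IZR (l0 * Z.of_nat (4^d) + Z.of_nat (4^d))).
  { rewrite !plus_IZR, IZR_mul_pow4, <- INR_IZR_INZ, INR_pow4. simpl. lra. }
  apply le_IZR in K1', K2', L1', L2'.
  exists d, (Z.to_nat (k - k0 * Z.of_nat (2^d))), (Z.to_nat (l - l0 * Z.of_nat (4^d))).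
  unfold Qb. split; [|split].
  - rewrite !Z2Nat.id by lia. f_equal; [f_equal|]; lia.
  - lia.
  - lia.
Qed.

Definition lsum (F : dyadic -> R) (s : list dyadic) : R := fold_right (fun Q acc => F Q + acc) 0 s.

Lemma lsum_le (F G : dyadic -> R) s : (forall Q, In Q s -> F Q <= G Q) -> lsum F s <= lsum G s.
Proof. induction s; simpl; intros H; [lra|]. pose proof (H a (or_introl eq_refl)).
  assert (lsum F s <= lsum G s) by (apply IHs; auto). lra. Qed.

Definition dyadic_eq_dec (x y : dyadic) : {x = y} + {x <> y}.
Proof. repeat decide equality. Defined.

Lemma lsum_nonneg F s : (forall Q, 0 <= F Q) -> 0 <= lsum F s.
Proof. intros H; induction s; simpl; [lra|]. pose proof (H a). lra. Qed.

Lemma lsum_remove_le F x B : (forall Q, 0 <= F Q) -> lsum F (remove dyadic_eq_dec x B) <= lsum F B.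
Proof. intros H; induction B; simpl; [lra|]. destruct (dyadic_eq_dec x a); simpl; pose proof (H a); lra. Qed.

Lemma lsum_remove F x B : (forall Q, 0 <= F Q) -> In x B -> F x + lsum F (remove dyadic_eq_dec x B) <= lsum F B.
Proof.
  intros H; induction B; simpl; intros Hin; [tauto|].
  destruct (dyadic_eq_dec x a) as [E|E]; simpl.
  - subst. pose proof (lsum_remove_le F a B H). lra.
  - destruct Hin as [Hin|Hin]; [congruence|]. pose proof (IHB Hin). lra.
Qed.

Lemma lsum_box F s : forall B, NoDup s -> (forall Q, In Q s -> In Q B) -> (forall Q, 0 <= F Q) -> lsum F s <= lsum F B.
Proof.
  induction s; intros B Hnd Hin HF; simpl.
  - apply lsum_nonneg; auto.
  - inversion Hnd; subst.
    pose proof (lsum_remove F a B HF (Hin a (or_introl eq_refl))).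
    assert (lsum F s <= lsum F (remove dyadic_eq_dec a B)).
    { apply IHs; auto. intros Q HQ. apply in_in_remove. intro; subst; tauto. apply Hin; right; auto. }
    lra.
Qed.

Lemma lsum_app F l1 l2 : lsum F (l1 ++ l2) = lsum F l1 + lsum F l2.
Proof. induction l1; simpl; [lra|]. rewrite IHl1; lra. Qed.

Lemma lsum_flat_map F (G : nat -> list dyadic) n : lsum F (flat_map G (seq 0 n)) = sumn (fun d => lsum F (G d)) n.
Proof. induction n; [reflexivity|]. rewrite seq_S, flat_map_app, lsum_app, IHn. cbn [sumn flat_map]. rewrite app_nil_r. reflexivity. Qed.

Lemma lsum_map F (g : nat -> dyadic) n : lsum F (map g (seq 0 n)) = sumn (fun i => F (g i)) n.
Proof. induction n; [reflexivity|]. rewrite seq_S, map_app, lsum_app, IHn. cbn [sumn map lsum fold_right]. unfold lsum; simpl. lra. Qed.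

Definition boxl (n0 k0 l0 : Z) (Dm : nat) : list dyadic :=
  flat_map (fun d => flat_map (fun i => map (fun i' => Qb n0 k0 l0 d i i') (seq 0 (4^d))) (seq 0 (2^d))) (seq 0 Dm).

Lemma lsum_boxl F n0 k0 l0 Dm : lsum F (boxl n0 k0 l0 Dm) =
  sumn (fun d => sumn (fun i => sumn (fun i' => F (Qb n0 k0 l0 d i i')) (4^d)) (2^d)) Dm.
Proof. unfold boxl. rewrite lsum_flat_map. apply sumn_ext. intros d _. rewrite lsum_flat_map.
  apply sumn_ext. intros i _. apply lsum_map. Qed.

Lemma in_boxl n0 k0 l0 Dm d i i' : (d < Dm)%nat -> (i < 2^d)%nat -> (i' < 4^d)%nat ->
  In (Qb n0 k0 l0 d i i') (boxl n0 k0 l0 Dm).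
Proof.
  intros. unfold boxl. apply in_flat_map. exists d. split; [apply in_seq; lia|].
  apply in_flat_map. exists i. split; [apply in_seq; lia|]. apply in_map. apply in_seq; lia.
Qed.

Lemma sumn_swap (F : nat -> nat -> R) a b :
  sumn (fun i => sumn (fun j => F i j) b) a = sumn (fun j => sumn (fun i => F i j) a) b.
Proof.
  induction a; simpl.
  - induction b; simpl; auto. rewrite <- IHb. lra.
  - rewrite IHa. rewrite <- sumn_plus. reflexivity.
Qed.

Lemma term_le_sumn (f : nat -> R) n j : (forall i, (i < n)%nat -> 0 <= f i) -> (j < n)%nat -> f j <= sumn f n.
Proof.
  induction n; intros H Hj; [lia|]. simpl.
  assert (0 <= sumn f n) by (apply sumn_nonneg; intros; apply H; lia).
  destruct (Nat.eq_dec j n).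
  - subst. lra.
  - pose proof (IHn (fun i Hi => H i ltac:(lia)) ltac:(lia)). pose proof (H n ltac:(lia)). lra.
Qed.

Lemma sumn_le_scal (f : nat -> R) c K n : 0 <= c -> sumn f n <= K -> sumn (fun i => c * f i) n <= c * K.
Proof. intros Hc H. rewrite sumn_scal. apply Rmult_le_compat_l; auto. Qed.

Lemma GA (a b X : nat -> nat -> R) (Ka Kb : R) nI nI' nQ nU :
  (forall i u, 0 <= a i u) -> (forall q i', 0 <= b q i') -> (forall q u, 0 <= X q u) ->
  (forall u, sumn (fun i => a i u) nI <= Ka) -> (forall q, sumn (fun i' => b q i') nI' <= Kb) ->
  sumn (fun i => sumn (fun i' => sumn (fun q => sumn (fun u => a i u * b q i' * X q u) nU) nQ) nI') nI
  <= Ka * Kb * sumn (fun q => sumn (fun u => X q u) nU) nQ.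
Proof.
  intros Ha Hb HX HKa HKb.
  rewrite (sumn_ext _ (fun i => sumn (fun q => sumn (fun i' => sumn (fun u => a i u * b q i' * X q u) nU) nI') nQ) nI)
    by (intros; apply sumn_swap).
  rewrite sumn_swap.
  apply Rle_trans with (sumn (fun q => sumn (fun i => sumn (fun u => Kb * (a i u * X q u)) nU) nI) nQ).
  { apply sumn_le; intros q _. apply sumn_le; intros i _. rewrite sumn_swap. apply sumn_le; intros u _.
    rewrite (sumn_ext _ (fun i' => (a i u * X q u) * b q i')) by (intros; ring).
    rewrite sumn_scal. rewrite (Rmult_comm Kb). apply Rmult_le_compat_l; [pose proof (Ha i u); pose proof (HX q u); nra|]. apply HKb. }
  apply Rle_trans with (sumn (fun q => Kb * (Ka * sumn (fun u => X q u) nU)) nQ).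
  { apply sumn_le; intros q _.
    rewrite (sumn_ext _ (fun i => Kb * sumn (fun u => a i u * X q u) nU)) by (intros; apply sumn_scal).
    rewrite sumn_scal. 
    assert (0 <= Kb). { pose proof (HKb 0%nat). pose proof (sumn_nonneg (fun i' => b 0%nat i') nI' (fun i _ => Hb 0%nat i)). lra. }
    apply Rmult_le_compat_l; auto. rewrite sumn_swap.
    rewrite (sumn_ext _ (fun u => X q u * sumn (fun i => a i u) nI)) by (intros; rewrite <- sumn_scal; apply sumn_ext; intros; ring).
    rewrite <- sumn_scal. apply sumn_le. intros u _. rewrite Rmult_comm. apply Rmult_le_compat_r; auto. }
  rewrite sumn_scal, sumn_scal. right; ring.
Qed.

Lemma In_max_fold (h : dyadic -> nat) (s : list dyadic) Q : In Q s -> (h Q <= fold_right Nat.max 0 (map h s))%nat.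
Proof. induction s; simpl; intros H; [tauto|]. destruct H; subst; [lia|]. pose proof (IHs H). lia. Qed.

Section Main.
Variables (M eps C : R) (p m : nat) (delta1 : R).
Hypotheses (HM : 1 <= M) (Heps : 0 < eps <= 1) (HC : 1 <= C) (Hp : 6 * C <= 2^p) (Hd1 : 0 < delta1).
Variable f : Wpt -> Hpt.
Hypothesis Hf : bilipschitz M f.
Variables n0 k0 l0 : Z.

Definition rho0 := eps / 2.
Definition eta := rho0 / (2 * M).
Definition h0 := powerRZ 2 (- n0).
Definition H0 := 2^p * h0.
Definition al0 := IZR k0 * h0 - 2 * H0.
Definition alpha (sg : bool) := if sg then al0 - H0/3 else al0.

Definition NF (t a b lam : R) := forall L, H_horizontal_line L -> exists y, a <= y <= b /\ ~ in_Nbhd L lam (f (y, t)).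
Definition line (t : R) := fun y => f (y, t).

Definition hQ (Q : dyadic) := side Q.
Definition cyQ (Q : dyadic) := fst (center Q).
Definition ctQ (Q : dyadic) := snd (center Q).
Definition dQ (Q : dyadic) := Z.to_nat (fst (fst Q) - n0).
Definition tclose (tauq : R) (Q : dyadic) := Rabs (tauq - ctQ Q) <= 2 * ((C * hQ Q) * (C * hQ Q)).
Definition badt (tauq : R) (Q : dyadic) := tclose tauq Q /\
  NF tauq (cyQ Q - C * hQ Q) (cyQ Q + C * hQ Q) (rho0 * (C * hQ Q) / 2).

Lemma h0_pos : 0 < h0.
Proof. apply powerRZ_lt; lra. Qed.
Lemma H0_pos : 0 < H0.
Proof. unfold H0. pose proof h0_pos. pose proof (pow2_pos p). nra. Qed.

Lemma Qb_side d i i' : side (Qb n0 k0 l0 d i i') = h0 / 2^d.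
Proof. unfold side, Qb, h0. apply pRZ_shift; lra. Qed.

Lemma Qb_center d i i' : center (Qb n0 k0 l0 d i i') =
  ((IZR k0 * 2^d + INR i + /2) * (h0/2^d), (IZR l0 * 4^d + INR i' + /2) * (h0*h0/4^d)).
Proof.
  unfold center, Qb. rewrite !plus_IZR, IZR_mul_pow2, IZR_mul_pow4, <- !INR_IZR_INZ.
  rewrite !pRZ_shift by lra. fold h0. rewrite four_sq. fold h0. reflexivity.
Qed.

Lemma Qb_d d i i' : dQ (Qb n0 k0 l0 d i i') = d.
Proof. unfold dQ, Qb. simpl. replace (n0 + Z.of_nat d - n0)%Z with (Z.of_nat d) by lia. apply Nat2Z.id. Qed.

Lemma dpar_line u v t : dpar (u, t) (v, t) = Rabs (u - v).
Proof. unfold dpar. replace (t - t) with 0 by ring. rewrite Rabs_R0, sqrt_0. apply Rmax_left. apply Rabs_pos. Qed.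

Lemma dpar_vert y t t' : dpar (y, t) (y, t') = sqrt (Rabs (t - t')).
Proof. unfold dpar. replace (y - y) with 0 by ring. rewrite Rabs_R0. apply Rmax_right. apply sqrt_pos. Qed.

Lemma line_lip t : lipline M (line t).
Proof. intros u v. unfold line. destruct (Hf (u,t) (v,t)) as [A B]. rewrite dpar_line in A, B. auto. Qed.


Definition T0 := IZR l0 * (h0*h0) - 2*(C*C)*(h0*h0).
Definition Tlen := (1 + 4*(C*C))*(h0*h0).
Definition gstep (Ng : nat) := Tlen / INR Ng.
Definition tauq (Ng q : nat) := T0 + INR q * gstep Ng.

Lemma eta_pos : 0 < eta.
Proof. unfold eta, rho0. apply Rdiv_lt_0_compat; lra. Qed.
Lemma eta_le : eta <= 1/4.
Proof. unfold eta, rho0. apply Rmult_le_reg_r with (2*M); [lra|]. unfold Rdiv. rewrite Rmult_assoc, Rinv_l by lra. nra. Qed.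

Lemma not_admissible Q : in_bad f C eps Q ->
  exists t0, Rabs (ctQ Q - t0) <= (C * hQ Q) * (C * hQ Q) /\
   NF t0 (cyQ Q - C * hQ Q) (cyQ Q + C * hQ Q) (rho0 * (C * hQ Q)).
Proof.
  intros Hb. unfold in_bad, ruler_ge in Hb.
  assert (Hr : 0 < C * hQ Q) by (unfold hQ; destruct Q as [[n k] l]; unfold side; pose proof (powerRZ_lt 2 (-n) ltac:(lra)); nra).
  assert (Hna : ~ ruler_admissible f (center Q) (C * side Q) (eps/2)).
  { intro Ha. pose proof (Hb (eps/2) ltac:(lra) Ha). lra. }
  unfold ruler_admissible in Hna. apply not_all_ex_not in Hna. destruct Hna as [t0 Ht0].
  assert (HL : forall L, H_horizontal_line L -> exists y, Wball (center Q) (C * side Q) (y, t0) /\ ~ in_Nbhd L (eps / 2 * (C * side Q)) (f (y, t0))).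
  { intros L HL. apply NNPP. intro Hn. apply Ht0. exists L. split; auto. intros y Hy.
    apply NNPP. intro Hn2. apply Hn. exists y. split; auto. }
  exists t0.
  assert (HLine : H_horizontal_line (fun q => exists s, q = Hmul (0,0,0) (s * 1, s * 0, 0))).
  { exists (0,0,0), 1, 0. split; [lra|]. intros; tauto. }
  destruct (HL _ HLine) as [y0 [Hw _]].
  unfold Wball, dpar in Hw. destruct (center Q) as [cy ct] eqn:Ec.
  unfold cyQ, ctQ. rewrite Ec. simpl. fold (hQ Q) in *.
  split.
  - apply sqrt_sq_le; [lra|]. eapply Rle_trans; [apply Rmax_r|]. unfold hQ. apply Hw.
  - intros L HL'. destruct (HL L HL') as [y [Hy1 Hy2]]. exists y. split.
    + unfold Wball, dpar in Hy1. pose proof (Rmax_l (Rabs (cy - y)) (sqrt (Rabs (ct - t0)))) as Hm.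
      assert (Hc : Rabs (cy - y) <= C * hQ Q) by lra. apply Rabs_le_between in Hc. lra.
    + unfold rho0, hQ. auto.
Qed.

Lemma NF_perturb t0 t a b lam r : 0 <= r -> Rabs (t - t0) <= eta * eta * (r * r) -> M * (eta * r) <= lam ->
  NF t0 a b (2 * lam) -> NF t a b lam.
Proof.
  intros Hr Ht Hl Hn L HL. destruct (Hn L HL) as [y [Hy Hy2]]. exists y. split; auto.
  intro Hin. apply Hy2. replace (2 * lam) with (lam + lam) by ring.
  apply in_Nbhd_tri with (f (y, t)); auto.
  destruct (Hf (y, t0) (y, t)) as [_ B]. rewrite dpar_vert in B.
  assert (sqrt (Rabs (t0 - t)) <= eta * r).
  { apply sqrt_le_c. pose proof eta_pos; nra. rewrite Rabs_minus_sym. lra. }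
  eapply Rle_trans; [apply B|]. eapply Rle_trans; [|apply Hl]. apply Rmult_le_compat_l; lra.
Qed.

Lemma step1 d i i' Ng : (i < 2^d)%nat -> (i' < 4^d)%nat -> (1 <= Ng)%nat ->
  in_bad f C eps (Qb n0 k0 l0 d i i') ->
  gstep Ng <= eta * eta * ((C * hQ (Qb n0 k0 l0 d i i')) * (C * hQ (Qb n0 k0 l0 d i i'))) ->
  hQ (Qb n0 k0 l0 d i i') ^ 3 <= gstep Ng / (eta*eta*(C*C)) *
     (hQ (Qb n0 k0 l0 d i i') * sumn (fun q => indR (badt (tauq Ng q) (Qb n0 k0 l0 d i i'))) (S Ng)).
Proof.
  intros Hi Hi' HNg Hb Hg.
  set (Q := Qb n0 k0 l0 d i i') in *.
  destruct (not_admissible Q Hb) as [t0 [Ht0 HN]].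
  set (h := hQ Q) in *. set (r := C * h) in *.
  assert (Hh : h = h0 / 2^d) by (unfold h, hQ, Q; apply Qb_side).
  pose proof h0_pos. pose proof (pow2_pos d). assert (P4 : 0 < 4^d) by (apply pow_lt; lra).
  assert (Hhp : 0 < h) by (rewrite Hh; apply Rdiv_lt_0_compat; lra).
  assert (Hhh0 : h <= h0).
  { rewrite Hh. assert (1 <= 2^d) by (apply pow_R1_Rle; lra). apply Rmult_le_reg_r with (2^d); [lra|].
    unfold Rdiv. rewrite Rmult_assoc, Rinv_l by lra. nra. }
  assert (Hct : IZR l0 * (h0*h0) <= ctQ Q <= (IZR l0 + 1) * (h0*h0)).
  { unfold ctQ, Q. rewrite Qb_center. simpl.
    assert (INR i' + 1 <= 4^d) by (rewrite <- INR_pow4, <- S_INR; apply le_INR; lia).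
    pose proof (pos_INR i').
    replace ((IZR l0 * 4 ^ d + INR i' + / 2) * (h0 * h0 / 4 ^ d)) with (IZR l0 * (h0*h0) + (INR i' + /2) * (h0*h0) / 4^d) by (field; lra).
    assert (0 <= (INR i' + /2) * (h0*h0) / 4^d) by (apply Rdiv_le_0_compat; nra).
    assert ((INR i' + /2) * (h0*h0) / 4^d <= h0*h0).
    { apply Rmult_le_reg_r with (4^d); [lra|]. field_simplify; [|lra]. nra. }
    lra. }
  pose proof eta_pos. pose proof eta_le.
  assert (Hr : 0 < r) by (unfold r; nra).
  assert (Hrr : r * r <= C*C*(h0*h0)) by (unfold r; assert (h*h <= h0*h0) by nra; nra).
  set (g := gstep Ng) in *.
  assert (Hgp : 0 < g).
  { unfold g, gstep, Tlen. apply Rdiv_lt_0_compat. nra. apply lt_0_INR; lia. }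
  set (e2 := eta * eta * (r * r)).
  assert (He2 : 0 < e2) by (unfold e2; nra).
  assert (Hbad : forall q, Rabs (tauq Ng q - t0) <= e2 -> badt (tauq Ng q) Q).
  { intros q Hq. split.
    - unfold tclose. fold h r. apply Rabs_le_between in Hq. apply Rabs_le_between in Ht0.
      assert (eta*eta <= 1) by nra. assert (0 <= r*r) by nra.
      apply Rabs_le. assert (e2 <= r*r) by (unfold e2; nra). lra.
    - fold h r. apply (NF_perturb t0 _ _ _ _ r); [lra|exact Hq| |].
      + unfold eta, rho0. right. field. lra.
      + replace (2 * (rho0 * r / 2)) with (rho0 * r) by field. exact HN. }
  set (A := (t0 - e2 - T0) / g). set (B := (t0 + e2 - T0) / g).
  assert (HA : 0 <= A).
  { unfold A. apply Rdiv_le_0_compat; auto. unfold T0. apply Rabs_le_between in Ht0.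
    assert (eta*eta <= 1) by nra. assert (0 <= r*r) by nra.
    assert (e2 <= C*C*(h0*h0)) by (unfold e2; nra). lra. }
  assert (HB : B <= INR (S Ng)).
  { unfold B. rewrite S_INR. apply Rmult_le_reg_r with g; auto. unfold Rdiv. rewrite Rmult_assoc, Rinv_l by lra.
    assert (INR Ng * g = Tlen) by (unfold g, gstep; field; apply not_0_INR; lia).
    unfold T0, Tlen in *. apply Rabs_le_between in Ht0.
    assert (eta*eta <= 1) by nra. assert (0 <= r*r) by nra.
    assert (e2 <= C*C*(h0*h0)) by (unfold e2; nra). nra. }
  assert (Hcount : sumn (fun q => indR (A <= INR q <= B)) (S Ng) <= sumn (fun q => indR (badt (tauq Ng q) Q)) (S Ng)).
  { apply sumn_le. intros q _. apply ind_mono. intros [Q1 Q2]. apply Hbad.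
    unfold A, B in *. apply Rabs_le. unfold tauq. fold g.
    apply Rmult_le_compat_r with (r := g) in Q1; [|lra]. apply Rmult_le_compat_r with (r := g) in Q2; [|lra].
    unfold Rdiv in Q1, Q2. rewrite Rmult_assoc, Rinv_l in Q1, Q2 by lra. lra. }
  pose proof (count_lower A B HA (S Ng)) as CL.
  rewrite Rmin_left in CL by lra.
  assert (HBA : B - A = 2 * e2 / g) by (unfold A, B; field; lra).
  assert (Hcnt : e2 / g <= sumn (fun q => indR (badt (tauq Ng q) Q)) (S Ng)).
  { assert (1 <= e2 / g). { apply Rmult_le_reg_r with g; auto. unfold Rdiv. rewrite Rmult_assoc, Rinv_l by lra. fold e2 in Hg. lra. }
    lra. }
  assert (HC2 : 0 < eta*eta*(C*C)) by nra.
  replace (h^3) with (h * (h*h)) by ring.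
  apply Rle_trans with (h * (g / (eta * eta * (C * C)) * sumn (fun q => indR (badt (tauq Ng q) Q)) (S Ng))); [|right; ring].
  apply Rmult_le_compat_l; [lra|].
  apply Rle_trans with (g / (eta * eta * (C * C)) * (e2 / g)).
  - right. unfold e2, r. field. lra.
  - apply Rmult_le_compat_l; auto. apply Rdiv_le_0_compat; lra.
Qed.


Hypothesis HFC : forall g, lipline M g -> forall a G, 0 < G -> chainX g a G (2^m) < delta1 * G ->
  exists L, H_horizontal_line L /\ forall y, a <= y <= a + G -> in_Nbhd L (rho0 * C / (2 * 2^p) * G) (g y).

Definition cont (sg : bool) (u : nat) (Q : dyadic) :=
  gpt (alpha sg) H0 (dQ Q) u <= cyQ Q - C * hQ Q /\ cyQ Q + C * hQ Q <= gpt (alpha sg) H0 (dQ Q) (S u).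
Definition Xq (t : R) (sg : bool) (d u : nat) := Xc (line t) (alpha sg) H0 m d u.
Definition Rsg (t : R) (sg : bool) (Q : dyadic) :=
  sumn (fun u => indR (cont sg u Q) * indR (tclose t Q) * Xq t sg (dQ Q) u) (6 * 2^(dQ Q)).

Lemma Xq_nonneg t sg d u : 0 <= Xq t sg d u.
Proof. unfold Xq, Xc. apply chainX_nonneg. pose proof (Nat.pow_nonzero 2 m). lia. Qed.

Lemma Rsg_nonneg t sg Q : 0 <= Rsg t sg Q.
Proof. unfold Rsg. apply sumn_nonneg. intros. pose proof (ind_01 (cont sg i Q)). pose proof (ind_01 (tclose t Q)).
  pose proof (Xq_nonneg t sg (dQ Q) i). apply Rmult_le_pos; [apply Rmult_le_pos|]; lra. Qed.

Lemma step2 d i i' t : (i < 2^d)%nat ->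
  hQ (Qb n0 k0 l0 d i i') * indR (badt t (Qb n0 k0 l0 d i i')) <=
  / (delta1 * 2^p) * (Rsg t false (Qb n0 k0 l0 d i i') + Rsg t true (Qb n0 k0 l0 d i i')).
Proof.
  intros Hi. set (Q := Qb n0 k0 l0 d i i').
  pose proof (pow2_pos p) as P2p. pose proof (pow2_pos d) as P2d.
  assert (Hinv : 0 < / (delta1 * 2^p)) by (apply Rinv_0_lt_compat; nra).
  pose proof (Rsg_nonneg t false Q). pose proof (Rsg_nonneg t true Q).
  destruct (classic (badt t Q)) as [Hb|Hb]; [|rewrite ind_F by auto; rewrite Rmult_0_r; nra].
  rewrite ind_T by auto. rewrite Rmult_1_r. destruct Hb as [Htc HN].
  set (h := hQ Q) in *. set (r := C * h) in *.
  pose proof h0_pos. pose proof H0_pos.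
  assert (Hh : h = h0 / 2^d) by (unfold h, hQ, Q; apply Qb_side).
  assert (Hhp : 0 < h) by (rewrite Hh; apply Rdiv_lt_0_compat; lra).
  set (G := H0 / 2^d).
  assert (HG : G = 2^p * h) by (unfold G, H0; rewrite Hh; field; lra).
  assert (HGp : 0 < G) by (rewrite HG; nra).
  assert (HGH : G <= H0).
  { unfold G. assert (1 <= 2^d) by (apply pow_R1_Rle; lra). apply Rmult_le_reg_r with (2^d); [lra|].
    unfold Rdiv. rewrite Rmult_assoc, Rinv_l by lra. nra. }
  assert (Hh06 : 6 * h0 <= H0) by (unfold H0; nra).
  assert (Hcy : IZR k0 * h0 <= cyQ Q <= (IZR k0 + 1) * h0).
  { unfold cyQ, Q. rewrite Qb_center. simpl.
    assert (INR i + 1 <= 2^d) by (rewrite <- pow2_INR, <- S_INR; apply le_INR; lia).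
    pose proof (pos_INR i).
    replace ((IZR k0 * 2 ^ d + INR i + / 2) * (h0 / 2 ^ d)) with (IZR k0 * h0 + (INR i + /2) * h0 / 2^d) by (field; lra).
    assert (0 <= (INR i + /2) * h0 / 2^d) by (apply Rdiv_le_0_compat; nra).
    assert ((INR i + /2) * h0 / 2^d <= h0).
    { apply Rmult_le_reg_r with (2^d); [lra|]. field_simplify; [|lra]. nra. }
    lra. }
  set (cy := cyQ Q) in *.
  assert (Hr : 0 < r) by (unfold r; nra).
  assert (H2r : cy + r - (cy - r) <= H0 / 2^d / 3).
  { fold G. rewrite HG. unfold r. nra. }
  destruct (third_lemma al0 H0 (cy - r) (cy + r) d H0_pos ltac:(lra) H2r) as [sg [v [V1 V2]]].
  replace (if sg then al0 - H0/3 else al0) with (alpha sg) in V1, V2 by (destruct sg; reflexivity).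
  fold G in V1, V2.
  assert (Hal : al0 - H0/3 <= alpha sg <= al0) by (destruct sg; simpl; lra).
  unfold al0 in Hal.
  assert (Hv0 : 0 <= IZR v).
  { assert ((IZR v + 1) * G >= 2 * G) by nra.
    apply Rmult_le_reg_r with G; auto. nra. }
  assert (Hv1 : IZR v * G <= 3 * H0) by nra.
  destruct (Z_to_nat_INR v Hv0) as [u [Hu _]].
  rewrite <- Hu in V1, V2, Hv1.
  assert (Hu6 : (u < 6 * 2^d)%nat).
  { apply INR_lt. rewrite mult_INR, pow2_INR. simpl.
    assert (INR u <= 3 * 2^d).
    { assert (EH : H0 = 2^d * G) by (unfold G; field; lra). rewrite EH in Hv1.
      apply Rmult_le_reg_r with G; auto. nra. }
    lra. }
  assert (Hd : dQ Q = d) by (unfold Q; apply Qb_d).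
  assert (Hcont : cont sg u Q).
  { unfold cont. rewrite Hd. unfold gpt. rewrite S_INR. fold G. fold h r cy. split; lra. }
  assert (HX : delta1 * G <= Xq t sg d u).
  { destruct (Rle_lt_dec (delta1 * G) (Xq t sg d u)) as [?|Hlt]; auto. exfalso.
    unfold Xq, Xc in Hlt. fold G in Hlt.
    destruct (HFC (line t) (line_lip t) (gpt (alpha sg) H0 d u) G HGp Hlt) as [L [HL Hall]].
    destruct (HN L HL) as [y [Hy Hny]]. apply Hny.
    apply in_Nbhd_mono with (rho0 * C / (2 * 2 ^ p) * G).
    - right. rewrite HG. unfold r. field. lra.
    - apply Hall. unfold gpt. fold G. lra. }
  assert (Hterm : Xq t sg d u <= Rsg t sg Q).
  { unfold Rsg. rewrite Hd.
    replace (Xq t sg d u) with (indR (cont sg u Q) * indR (tclose t Q) * Xq t sg d u)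
      by (rewrite !ind_T by auto; ring).
    apply (term_le_sumn (fun u0 => indR (cont sg u0 Q) * indR (tclose t Q) * Xq t sg d u0)); auto.
    intros. pose proof (ind_01 (cont sg i0 Q)). pose proof (ind_01 (tclose t Q)).
    pose proof (Xq_nonneg t sg d i0). apply Rmult_le_pos; [apply Rmult_le_pos|]; lra. }
  assert (Hsum : Rsg t sg Q <= Rsg t false Q + Rsg t true Q) by (destruct sg; lra).
  assert (Ehg : h = G / 2^p) by (rewrite HG; field; lra).
  rewrite Ehg. apply Rle_trans with (/ (delta1 * 2^p) * Xq t sg d u).
  - apply Rmult_le_reg_l with (delta1 * 2^p); [nra|]. field_simplify; try lra.
  - apply Rmult_le_compat_l; lra.
Qed.


Definition hd (d : nat) := h0 / 2^d.
Definition cyd (d i : nat) := (IZR k0 * 2^d + INR i + /2) * (h0/2^d).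
Definition ctd (d i' : nat) := (IZR l0 * 4^d + INR i' + /2) * (h0*h0/4^d).

Lemma cont_Qb sg u d i i' : cont sg u (Qb n0 k0 l0 d i i') =
  (gpt (alpha sg) H0 d u <= cyd d i - C * hd d /\ cyd d i + C * hd d <= gpt (alpha sg) H0 d (S u)).
Proof. unfold cont, cyQ, hQ. rewrite Qb_d, Qb_center, Qb_side. reflexivity. Qed.

Lemma tclose_Qb t d i i' : tclose t (Qb n0 k0 l0 d i i') =
  (Rabs (t - ctd d i') <= 2 * ((C * hd d) * (C * hd d))).
Proof. unfold tclose, ctQ, hQ. rewrite Qb_center, Qb_side. reflexivity. Qed.

Lemma hd_pos d : 0 < hd d.
Proof. unfold hd. apply Rdiv_lt_0_compat; [apply h0_pos|apply pow2_pos]. Qed.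

Lemma count_a sg u d :
  sumn (fun i => indR (gpt (alpha sg) H0 d u <= cyd d i - C * hd d /\ cyd d i + C * hd d <= gpt (alpha sg) H0 d (S u))) (2^d)
  <= 2^p + 1.
Proof.
  pose proof (hd_pos d) as Hh. pose proof (pow2_pos p).
  set (A := gpt (alpha sg) H0 d u / hd d - IZR k0 * 2^d - /2).
  apply Rle_trans with (sumn (fun i => indR (A <= INR i <= A + 2^p)) (2^d)).
  - apply sumn_le. intros i _. apply ind_mono. intros [C1 C2].
    assert (Hc : cyd d i = (IZR k0 * 2^d + INR i + /2) * hd d) by reflexivity.
    assert (Hg : gpt (alpha sg) H0 d (S u) = gpt (alpha sg) H0 d u + 2^p * hd d).
    { unfold gpt, hd, H0. rewrite S_INR. field. apply pow_nonzero; lra. }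
    assert (HC0 : 0 <= C * hd d) by nra.
    assert (E : gpt (alpha sg) H0 d u = A * hd d + (IZR k0 * 2^d + /2) * hd d) by (unfold A; field; lra).
    split.
    + apply Rmult_le_reg_r with (hd d); auto. nra.
    + apply Rmult_le_reg_r with (hd d); auto. nra.
  - eapply Rle_trans; [apply count_upper'|]. unfold Rmax; destruct Rle_dec; lra.
Qed.

Lemma count_b t d :
  sumn (fun i' => indR (Rabs (t - ctd d i') <= 2 * ((C * hd d) * (C * hd d)))) (4^d) <= 4*(C*C) + 1.
Proof.
  pose proof (hd_pos d) as Hh.
  set (q := hd d * hd d). assert (Hq : 0 < q) by (unfold q; nra).
  assert (Ect : forall i', ctd d i' = (IZR l0 * 4^d + INR i' + /2) * q).
  { intros. unfold ctd, q, hd. rewrite pow4. field. apply pow_nonzero; lra. }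
  set (A := t / q - IZR l0 * 4^d - /2 - 2*(C*C)).
  apply Rle_trans with (sumn (fun i' => indR (A <= INR i' <= A + 4*(C*C))) (4^d)).
  - apply sumn_le. intros i _. apply ind_mono. intros Habs. rewrite Ect in Habs.
    apply Rabs_le_between in Habs.
    replace ((C * hd d) * (C * hd d)) with (C*C*q) in Habs by (unfold q; ring).
    assert (Et : t = (t / q) * q) by (field; lra).
    split; apply Rmult_le_reg_r with q; auto; unfold A; nra.
  - eapply Rle_trans; [apply count_upper'|]. unfold Rmax; destruct Rle_dec; nra.
Qed.

Definition Cst := 2 * (1 + 4*(C*C)) / (eta*eta*(C*C)) * / (delta1 * 2^p) * (2^p + 1) * (4*(C*C) + 1)
  * (2 * (INR m * (6 * M * 2^p))).

Lemma main_bound (s : list dyadic) : NoDup s ->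
  (forall Q, In Q s -> in_bad f C eps Q /\ dyadic_subset Q (n0, k0, l0)) ->
  sum_cubes s <= Cst * h0 ^ 3.
Proof.
  intros Hnd Hs.
  set (Dm := S (fold_right Nat.max 0%nat (map dQ s))).
  pose proof eta_pos as Het. pose proof h0_pos as Hh0. pose proof (pow2_pos p) as P2p.
  assert (HCC : 0 < eta*eta*(C*C)) by (apply Rmult_lt_0_compat; apply Rmult_lt_0_compat; lra).
  destruct (nat_above ((1 + 4*(C*C)) * 4^Dm / (eta*eta*(C*C)))) as [n Hn].
  set (Ng := S n).
  assert (HNg : (1 <= Ng)%nat) by (unfold Ng; lia).
  assert (HNgp : 0 < INR Ng) by (apply lt_0_INR; lia).
  assert (P4D : 0 < 4^Dm) by (apply pow_lt; lra).
  assert (Hgs : gstep Ng <= eta*eta*(C*C)*(h0*h0) / 4^Dm).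
  { unfold gstep, Tlen. assert (INR n <= INR Ng) by (apply le_INR; unfold Ng; lia).
    assert ((1 + 4*(C*C)) * 4^Dm <= INR Ng * (eta*eta*(C*C))) by (apply div_le_mul; auto; lra).
    replace ((1 + 4*(C*C))*(h0*h0) / INR Ng) with (((1 + 4*(C*C)) * 4^Dm) * ((h0*h0) / (INR Ng * 4^Dm))) by (field; lra).
    replace (eta*eta*(C*C)*(h0*h0)/4^Dm) with ((INR Ng * (eta*eta*(C*C))) * ((h0*h0) / (INR Ng * 4^Dm))) by (field; lra).
    apply Rmult_le_compat_r; [apply Rdiv_le_0_compat; nra | exact H1]. }
  set (c1 := gstep Ng / (eta*eta*(C*C))).
  assert (Hc1 : 0 <= c1) by (unfold c1, gstep, Tlen; apply Rdiv_le_0_compat; [apply Rdiv_le_0_compat|]; nra).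
  set (F := fun Q => c1 * (hQ Q * sumn (fun q => indR (badt (tauq Ng q) Q)) (S Ng))).
  assert (HF0 : forall Q, 0 <= F Q).
  { intros [[nn kk] ll]. unfold F. apply Rmult_le_pos; auto. apply Rmult_le_pos.
    unfold hQ, side. apply powerRZ_le; lra. apply sumn_nonneg. intros; apply ind_01. }
  assert (Hdec : forall Q, In Q s -> exists d i i', Q = Qb n0 k0 l0 d i i' /\ (i < 2^d)%nat /\ (i' < 4^d)%nat /\ (d < Dm)%nat).
  { intros [[nn kk] ll] HQ. destruct (decode nn kk ll n0 k0 l0 (proj2 (Hs _ HQ))) as [d [i [i' [E [Hi Hi']]]]].
    exists d, i, i'. repeat split; auto. pose proof (In_max_fold dQ s _ HQ). rewrite E, Qb_d in H. unfold Dm. lia. }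
  assert (S1 : sum_cubes s <= lsum F s).
  { change (sum_cubes s) with (lsum (fun Q => side Q ^ 3) s). apply lsum_le. intros Q HQ.
    destruct (Hdec Q HQ) as [d [i [i' [E [Hi [Hi' HdD]]]]]]. subst Q.
    apply step1; auto. apply (proj1 (Hs _ HQ)).
    eapply Rle_trans; [apply Hgs|]. unfold hQ. rewrite Qb_side.
    assert (4^d <= 4^Dm) by (apply Rle_pow; [lra|lia]). assert (0 < 4^d) by (apply pow_lt; lra).
    replace (C * (h0 / 2 ^ d) * (C * (h0 / 2 ^ d))) with (C*C*(h0*h0)/4^d) by (rewrite pow4; field; apply pow_nonzero; lra).
    replace (eta*eta*(C*C*(h0*h0)/4^d)) with ((eta*eta*(C*C)*(h0*h0)) * /4^d) by (field; lra).
    unfold Rdiv at 1. apply Rmult_le_compat_l; [nra|]. apply Rinv_le_contravar; auto. }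
  assert (S2 : lsum F s <= lsum F (boxl n0 k0 l0 Dm)).
  { apply lsum_box; auto. intros Q HQ. destruct (Hdec Q HQ) as [d [i [i' [E [Hi [Hi' HdD]]]]]]. subst Q.
    apply in_boxl; auto. }
  rewrite lsum_boxl in S2.
  set (K := c1 * / (delta1 * 2^p)).
  assert (HK : 0 <= K) by (unfold K; apply Rmult_le_pos; auto; left; apply Rinv_0_lt_compat; nra).
  assert (S3 : forall d, sumn (fun i => sumn (fun i' => F (Qb n0 k0 l0 d i i')) (4^d)) (2^d) <=
     K * ((2^p + 1) * (4*(C*C) + 1) *
       (sumn (fun q => sumn (fun u => Xq (tauq Ng q) false d u) (6 * 2^d)) (S Ng) +
        sumn (fun q => sumn (fun u => Xq (tauq Ng q) true d u) (6 * 2^d)) (S Ng)))).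
  { intros d.
    apply Rle_trans with (sumn (fun i => sumn (fun i' => K * sumn (fun q =>
        Rsg (tauq Ng q) false (Qb n0 k0 l0 d i i') + Rsg (tauq Ng q) true (Qb n0 k0 l0 d i i')) (S Ng)) (4^d)) (2^d)).
    { apply sumn_le; intros i Hi. apply sumn_le; intros i' _. unfold F, K.
      rewrite Rmult_assoc. apply Rmult_le_compat_l; auto.
      rewrite <- sumn_scal, <- sumn_scal. apply sumn_le. intros q _. apply step2; auto. }
    rewrite (sumn_ext _ (fun i => K * sumn (fun i' => sumn (fun q =>
        Rsg (tauq Ng q) false (Qb n0 k0 l0 d i i') + Rsg (tauq Ng q) true (Qb n0 k0 l0 d i i')) (S Ng)) (4^d)))
      by (intros; apply sumn_scal).
    rewrite sumn_scal. apply Rmult_le_compat_l; auto.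
    rewrite (sumn_ext _ (fun i => sumn (fun i' => sumn (fun q => Rsg (tauq Ng q) false (Qb n0 k0 l0 d i i')) (S Ng)) (4^d)
                                 + sumn (fun i' => sumn (fun q => Rsg (tauq Ng q) true (Qb n0 k0 l0 d i i')) (S Ng)) (4^d))).
    2:{ intros i _. rewrite <- sumn_plus. apply sumn_ext. intros. apply sumn_plus. }
    rewrite sumn_plus, Rmult_plus_distr_l.
    assert (G : forall sg, sumn (fun i => sumn (fun i' => sumn (fun q => Rsg (tauq Ng q) sg (Qb n0 k0 l0 d i i')) (S Ng)) (4^d)) (2^d)
        <= (2^p + 1) * (4*(C*C) + 1) * sumn (fun q => sumn (fun u => Xq (tauq Ng q) sg d u) (6 * 2^d)) (S Ng)).
    { intros sg.
      rewrite (sumn_ext _ (fun i => sumn (fun i' => sumn (fun q => sumn (fun u =>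
          indR (gpt (alpha sg) H0 d u <= cyd d i - C * hd d /\ cyd d i + C * hd d <= gpt (alpha sg) H0 d (S u))
          * indR (Rabs (tauq Ng q - ctd d i') <= 2 * ((C * hd d) * (C * hd d)))
          * Xq (tauq Ng q) sg d u) (6 * 2^d)) (S Ng)) (4^d)) (2^d)).
      2:{ intros i _. apply sumn_ext. intros i' _. apply sumn_ext. intros q _. unfold Rsg.
          rewrite Qb_d. apply sumn_ext. intros u _. rewrite cont_Qb, tclose_Qb. reflexivity. }
      apply GA.
      - intros; apply ind_01.
      - intros; apply ind_01.
      - intros; apply Xq_nonneg.
      - intros u. apply count_a.
      - intros q. apply count_b. }
    pose proof (G false). pose proof (G true). lra. }
  assert (S4 : forall q sg, sumn (fun d => sumn (fun u => Xq (tauq Ng q) sg d u) (6 * 2^d)) Dm <= INR m * (6 * M * H0)).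
  { intros q sg. unfold Xq. pose proof (line_pack (line (tauq Ng q)) M (alpha sg) H0 6 m Dm ltac:(pose proof H0_pos; lra) ltac:(lra)) as LP.
    replace (INR 6) with 6 in LP by (simpl; ring). apply LP. intros u v. apply (line_lip (tauq Ng q) u v). }
  eapply Rle_trans; [apply S1|]. eapply Rle_trans; [apply S2|].
  eapply Rle_trans; [apply sumn_le; intros d _; apply S3|].
  rewrite sumn_scal. rewrite sumn_scal.
  rewrite sumn_plus.
  rewrite (sumn_swap (fun d q => sumn (fun u => Xq (tauq Ng q) false d u) (6 * 2^d))).
  rewrite (sumn_swap (fun d q => sumn (fun u => Xq (tauq Ng q) true d u) (6 * 2^d))).
  assert (B1 : sumn (fun q => sumn (fun d => sumn (fun u => Xq (tauq Ng q) false d u) (6 * 2^d)) Dm) (S Ng) <= INR (S Ng) * (INR m * (6 * M * H0))).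
  { rewrite <- sumn_const. apply sumn_le. intros; apply S4. }
  assert (B2 : sumn (fun q => sumn (fun d => sumn (fun u => Xq (tauq Ng q) true d u) (6 * 2^d)) Dm) (S Ng) <= INR (S Ng) * (INR m * (6 * M * H0))).
  { rewrite <- sumn_const. apply sumn_le. intros; apply S4. }
  assert (HKp : 0 <= K * ((2^p + 1) * (4*(C*C) + 1))) by (apply Rmult_le_pos; auto; nra).
  apply Rle_trans with (K * ((2^p + 1) * (4*(C*C) + 1)) * (2 * (INR (S Ng) * (INR m * (6 * M * H0))))).
  { rewrite <- Rmult_assoc. apply Rmult_le_compat_l; auto. lra. }
  assert (Hgt : gstep Ng * INR (S Ng) <= 2 * Tlen).
  { unfold gstep. rewrite S_INR. assert (1 <= INR Ng) by (apply (le_INR 1); auto).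
    assert (0 < Tlen) by (unfold Tlen; nra).
    assert (Tlen / INR Ng <= Tlen) by (apply Rmult_le_reg_r with (INR Ng); auto; field_simplify; nra).
    replace (Tlen / INR Ng * (INR Ng + 1)) with (Tlen + Tlen / INR Ng) by (field; lra). lra. }
  unfold K, c1, Cst, H0, Tlen in *.
  assert (Hm0 : 0 <= INR m) by apply pos_INR.
  set (Z1 := / (delta1 * 2 ^ p)) in *.
  assert (HZ1 : 0 < Z1) by (unfold Z1; apply Rinv_0_lt_compat; nra).
  set (W1 := (2 ^ p + 1) * (4 * (C * C) + 1)).
  assert (HW1 : 0 < W1) by (unfold W1; nra).
  set (E := eta * eta * (C * C)) in *.
  set (gs := gstep Ng) in *.
  set (V := INR m * (6 * M * (2 ^ p * h0))).
  assert (HV : 0 <= V) by (unfold V; apply Rmult_le_pos; auto; apply Rmult_le_pos; [lra|]; apply Rmult_le_pos; lra).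
  replace (gs / E * Z1 * W1 * (2 * (INR (S Ng) * V))) with ((gs * INR (S Ng)) * (2 * Z1 * W1 * V / E)) by (field; lra).
  replace (2 * (1 + 4 * (C * C)) / E * Z1 * (2 ^ p + 1) * (4 * (C * C) + 1) * (2 * (INR m * (6 * M * 2 ^ p))) * h0 ^ 3)
    with ((2 * ((1 + 4 * (C * C)) * (h0 * h0))) * (2 * Z1 * W1 * V / E)) by (unfold W1, V; field; lra).
  apply Rmult_le_compat_r; auto.
  apply Rdiv_le_0_compat; [|lra]. apply Rmult_le_pos; [|lra]. apply Rmult_le_pos; [|lra]. lra.
Qed.

End Main.

Lemma INR_le_pow2 n : INR n <= 2^n.
Proof. induction n; [simpl; lra|]. rewrite S_INR. simpl. assert (1 <= 2^n) by (apply pow_R1_Rle; lra). lra. Qed.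

Theorem proposition4p3 :
  forall (M eps C : R), 1 <= M -> 0 < eps <= 1 -> 1 <= C ->
  exists C' : R, forall f : Wpt -> Hpt, bilipschitz M f ->
    forall (Q0 : dyadic) (s : list dyadic), NoDup s ->
      (forall Q, In Q s -> in_bad f C eps Q /\ dyadic_subset Q Q0) ->
      sum_cubes s <= C' * side Q0 ^ 3.
Proof.
  intros M eps C HM Heps HC.
  destruct (nat_above (6 * C)) as [p Hp0].
  assert (Hp : 6 * C <= 2^p) by (pose proof (INR_le_pow2 p); lra).
  assert (Hr1 : 0 < rho0 eps * C / (2 * 2^p)).
  { unfold rho0. apply Rdiv_lt_0_compat; [|pose proof (pow2_pos p); lra]. apply Rmult_lt_0_compat; lra. }
  destruct (flat_curve M (rho0 eps * C / (2 * 2^p)) HM Hr1) as [N0 [d1 [Hd1 HFCg]]].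
  exists (Cst M eps C p N0 d1).
  intros f Hf [[n0 k0] l0] s Hnd Hs.
  change (side (n0, k0, l0)) with (h0 n0).
  apply (main_bound M eps C p N0 d1 HM Heps HC Hp Hd1 f Hf n0 k0 l0); auto.
  intros g Hg a G HG Hc. apply (HFCg (2^N0)%nat); auto.
  pose proof (Nat.pow_gt_lin_r 2 N0 ltac:(lia)). lia.
Qed.
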